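(* Let $f:(a,b)\to\mathbb R$, $-\infty\le a<0<b\le\infty$, be continuous, strictly increasing, with $f((a,b))=\mathbb R$. Let $\vec X^m\in\underline V^h_{\partial_0}$ satisfy assumptions $(\mathfrak A)$ and $(\mathfrak B)^h$, let $\Delta t_m>0$, and (for the second scheme) let $\kappa^m\in V^h$ be given with $(\kappa^m-\mathfrak K^m(\kappa^m))(q_j)\in(a,b)$ for all $j$. Consider the problem: find $(\delta\vec X^{m+1},\kappa^{m+1})\in\underline V^h_\partial\times V^h$ with $(\kappa^{m+1}-\mathfrak K^m(\kappa^{m+1}))(q_j)\in(a,b)$ for all $j$ such that, with $\vec X^{m+1}=\vec X^m+\delta\vec X^{m+1}$, $$\Big(\tfrac{\vec X^{m+1}-\vec X^m}{\Delta t_m},\chi\,\vec\nu^m|\vec X^m_\rho|\Big)^h=\Big(f(\kappa^{m+1}-\mathfrak K^m(\kappa^{m+1})),\chi|\vec X^m_\rho|\Big)^h-\theta\,G^m\,\big(\chi,|\vec X^m_\rho|\big)^h\quad\forall\chi\in V^h,$$ $$\Big(\kappa^{m+1}\vec\nu^m,\vec\eta\,|\vec X^m_\rho|\Big)^h+\Big(\vec X^{m+1}_\rho,\vec\eta_\rho|\vec X^m_\rho|^{-1}\Big)=-\sum_{i=1}^2\sum_{p\in\partial_iI}\widehat\varrho^{(p)}\,\vec\eta(p)\cdot\vec e_{3-i}\quad\forall\vec\eta\in\underline V^h_\partial,$$ where either $\theta=0$ (scheme $(\mathcal A^f_m)^h$) or $\theta=1$ (scheme $(\mathcal A^{f,V}_m)^h$),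 and $G^m=\frac{(\vec X^m\cdot\vec e_1,\,f(\kappa^m-\mathfrak K^m(\kappa^m))|\vec X^m_\rho|)^h}{(\vec X^m\cdot\vec e_1,|\vec X^m_\rho|)}$. Then, for either choice of $\theta$: if $a=-\infty$ and $b=\infty$, a solution exists; and for general $a<b$ there exists at most one solution.
   Context: Setup. $\vec e_1=(1,0)^T$, $\vec e_2=(0,1)^T$; ''$\cdot$'' is the Euclidean inner product. $I$ is either the periodic interval $\mathbb R/\mathbb Z$ (with $\partial I=\emptyset$) or $I=(0,1)$ (with $\partial I=\{0,1\}$). $\partial I=\partial_DI\cup\partial_0I\cup\partial_1I\cup\partial_2I$ is a given disjoint partition, and $\widehat\varrho^{(p)}\in\mathbb R$, $p\in\{0,1\}$, are given constants with $|\widehat\varrho^{(p)}|\le1$. Let $J\ge3$, $h=1/J$, $q_j=jh$ ($j=0,\dots,J$; $q_0=q_J$ identified in the periodic case). $V^h$ is the space of continuous functions on $\overline I$ (periodic if $I=\mathbb R/\mathbb Z$) that are affine on each $[q_{j-1},q_j]$; $\underline V^h=[V^h]^2$; $\underline V^h_{\partial_0}=\{\vec\eta\in\underline V^h:\vec\eta(\rho)\cdot\vec e_1=0\ \forall\rho\in\partial_0I\}$; $\underline V^h_\partial=\{\vec\eta\in\underline V^h_{\partial_0}:\vec\eta(\rho)\cdot\vec e_i=0\ \forall\rho\in\partial_iI,\ i=1,2;\ \vec\eta(\rho)=\vec0\ \forall\rho\in\partial_DI\}$. $(\cdot,\cdot)$ is the $L^2(I)$ inner product (with dot product for vector functions),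 and for piecewise continuous $f,g$ the mass-lumped product is $(f,g)^h=\tfrac h2\sum_{j=1}^J[(fg)(q_j^-)+(fg)(q_{j-1}^+)]$; in particular for $\psi\in V^h$, $f(\psi)$ enters $(\cdot,\cdot)^h$ only through its nodal values $f(\psi(q_j))$. For $\vec X^m\in\underline V^h_{\partial_0}$ with $|\vec X^m_\rho|>0$ a.e., set $\vec\nu^m=-[\vec X^m_\rho]^\perp/|\vec X^m_\rho|$, where $(a,b)^\perp=(b,-a)$, and let $\vec\omega^m\in\underline V^h$ be defined by $(\vec\omega^m,\vec\varphi|\vec X^m_\rho|)^h=(\vec\nu^m,\vec\varphi|\vec X^m_\rho|)$ for all $\vec\varphi\in\underline V^h$. Assumption $(\mathfrak A)$: $|\vec X^m_\rho|>0$ a.e. on $I$ and $\vec X^m(\rho)\cdot\vec e_1>0$ for all $\rho\in\overline I\setminus\partial_0I$. Assumption $(\mathfrak B)^h$: the set $\{(\vec\nu^m,\chi|\vec X^m_\rho|)^h:\chi\in V^h\}\subset\mathbb R^2$ spans $\mathbb R^2$. For $\kappa\in V^h$, $\mathfrak K^m(\kappa)\in V^h$ is defined nodally by $\mathfrak K^m(\kappa)(q_j)=\frac{\vec\omega^m(q_j)\cdot\vec e_1}{\vec X^m(q_j)\cdot\vec e_1}$ if $q_j\in\overline I\setminus\partial_0I$ and $\mathfrak K^m(\kappa)(q_j)=-\kappa(q_j)$ if $q_j\in\partial_0I$. *)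

(* Defs.v *)
From Stdlib Require Import Reals Lra List.
Open Scope R_scope.

Definition vec := (R * R)%type.
Definition vdot (u v : vec) : R := fst u * fst v + snd u * snd v.
Definition vadd (u v : vec) : vec := (fst u + fst v, snd u + snd v).
Definition vsub (u v : vec) : vec := (fst u - fst v, snd u - snd v).
Definition vscal (c : R) (u : vec) : vec := (c * fst u, c * snd u).
Definition vperp (u : vec) : vec := (snd u, - fst u).
Definition vnorm (u : vec) : R := sqrt (vdot u u).
Definition e1 : vec := (1, 0).
Definition e2 : vec := (0, 1).

(* h = 1/J, q_j = j h ; element j (1 <= j <= J) is [q_(j-1), q_j]. *)
Definition hh (J : nat) : R := / INR J.
Definition node (J j : nat) : R := INR j * hh J.

Fixpoint sum_el (J : nat) (F : nat -> R) : R :=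
  match J with O => 0 | S k => sum_el k F + F (S k) end.

(* Functions of V^h are represented by their nodal values j = 0..J
   (values at indices > J are irrelevant).  In the periodic case
   (per = true) q_0 = q_J are identified. *)
Definition inVh (per : bool) (J : nat) (v : nat -> R) : Prop :=
  per = true -> v J = v O.
Definition inVVh (per : bool) (J : nat) (v : nat -> vec) : Prop :=
  per = true -> v J = v O.

(* piecewise (possibly discontinuous at nodes) functions: element index j and
   point rho in [q_(j-1), q_j] *)
Definition pwf := nat -> R -> R.
Definition vpwf := nat -> R -> vec.

Definition p1 (J : nat) (v : nat -> R) : pwf :=
  fun j x => v (j - 1)%nat + (v j - v (j - 1)%nat) * (x - node J (j - 1)) / hh J.
Definition vp1 (J : nat) (V : nat -> vec) : vpwf :=
  fun j x => vadd (V (j - 1)%nat)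
                  (vscal ((x - node J (j - 1)) / hh J) (vsub (V j) (V (j - 1)%nat))).

(* mass-lumped product (f,g)^h = h/2 sum_j [(fg)(q_j^-) + (fg)(q_(j-1)^+)] *)
Definition lump (J : nat) (F G : pwf) : R :=
  hh J / 2 * sum_el J (fun j => F j (node J j) * G j (node J j)
                               + F j (node J (j - 1)) * G j (node J (j - 1))).
Definition vlump (J : nat) (F G : vpwf) : R :=
  hh J / 2 * sum_el J (fun j => vdot (F j (node J j)) (G j (node J j))
                               + vdot (F j (node J (j - 1))) (G j (node J (j - 1)))).

(* L^2(I) product, for integrands that are affine on every element
   (all L^2 products occurring below are of this kind); for such integrands
   the integral over each element equals h * (mean of endpoint values),
   which is what is computed here (exactly). *)
Definition l2aff (J : nat) (F G : pwf) : R :=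
  sum_el J (fun j => hh J * (F j (node J (j - 1)) * G j (node J (j - 1))
                             + F j (node J j) * G j (node J j)) / 2).
Definition vl2aff (J : nat) (F G : vpwf) : R :=
  sum_el J (fun j => hh J * (vdot (F j (node J (j - 1))) (G j (node J (j - 1)))
                             + vdot (F j (node J j)) (G j (node J j))) / 2).

Definition vdrho (J : nat) (X : nat -> vec) (j : nat) : vec :=
  vscal (/ hh J) (vsub (X j) (X (j - 1)%nat)).
Definition lenrho (J : nat) (X : nat -> vec) (j : nat) : R := vnorm (vdrho J X j).
Definition nu (J : nat) (X : nat -> vec) (j : nat) : vec :=
  vscal (- / lenrho J X j) (vperp (vdrho J X j)).

(* boundary point p : bool, false <-> rho = 0 (node 0), true <-> rho = 1 (node J) *)
Inductive bctype := BD | B0 | B1 | B2.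
Definition bc_eqb (x y : bctype) : bool :=
  match x, y with
  | BD, BD | B0, B0 | B1, B1 | B2, B2 => true
  | _, _ => false end.
Definition bnode (J : nat) (p : bool) : nat := if p then J else O.
Definition in_bd (per : bool) (J : nat) (bc : bool -> bctype) (k : bctype) (j : nat) : bool :=
  negb per && ((bc_eqb (bc false) k && Nat.eqb j O) || (bc_eqb (bc true) k && Nat.eqb j J)).

Definition inVVh_d0 (per : bool) (J : nat) (bc : bool -> bctype) (V : nat -> vec) : Prop :=
  inVVh per J V /\ (forall j, in_bd per J bc B0 j = true -> vdot (V j) e1 = 0).
Definition inVVh_d (per : bool) (J : nat) (bc : bool -> bctype) (V : nat -> vec) : Prop :=
  inVVh_d0 per J bc V /\
  (forall j, in_bd per J bc B1 j = true -> vdot (V j) e1 = 0) /\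
  (forall j, in_bd per J bc B2 j = true -> vdot (V j) e2 = 0) /\
  (forall j, in_bd per J bc BD j = true -> V j = (0, 0)).

Definition bdry_rhs (per : bool) (J : nat) (bc : bool -> bctype) (rho : bool -> R) (eta : nat -> vec) : R :=
  let term p := match bc p with
                | B1 => rho p * vdot (eta (bnode J p)) e2
                | B2 => rho p * vdot (eta (bnode J p)) e1
                | _ => 0 end in
  if per then 0 else - (term false + term true).

Definition assumpA (per : bool) (J : nat) (bc : bool -> bctype) (X : nat -> vec) : Prop :=
  (forall j, (1 <= j <= J)%nat -> 0 < lenrho J X j) /\
  (forall j, (j <= J)%nat -> in_bd per J bc B0 j = false -> 0 < vdot (X j) e1).

Definition Bvec (J : nat) (X : nat -> vec) (chi : nat -> R) : vec :=
  (lump J (fun j _ => fst (nu J X j)) (fun j x => p1 J chi j x * lenrho J X j),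
   lump J (fun j _ => snd (nu J X j)) (fun j x => p1 J chi j x * lenrho J X j)).

(* the set {Bvec chi : chi in V^h} spans R^2 *)
Definition assumpB (per : bool) (J : nat) (X : nat -> vec) : Prop :=
  forall v : vec, exists l : list (R * (nat -> R)),
    Forall (fun pc => inVh per J (snd pc)) l /\
    v = fold_right (fun pc acc => vadd (vscal (fst pc) (Bvec J X (snd pc))) acc) (0, 0) l.

Definition omega_spec (per : bool) (J : nat) (X om : nat -> vec) : Prop :=
  inVVh per J om /\
  forall phi, inVVh per J phi ->
    vlump J (vp1 J om) (fun j x => vscal (lenrho J X j) (vp1 J phi j x))
    = vl2aff J (fun j _ => nu J X j) (fun j x => vscal (lenrho J X j) (vp1 J phi j x)).

Definition Kop (per : bool) (J : nat) (bc : bool -> bctype) (X om : nat -> vec) (kappa : nat -> R) (j : nat) : R :=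
  if in_bd per J bc B0 j then - kappa j else vdot (om j) e1 / vdot (X j) e1.

(* ---------- the interval (a,b), a,b extended reals (None = -oo / +oo) ---------- *)
Definition inab (a b : option R) (x : R) : Prop :=
  (match a with None => True | Some a' => a' < x end) /\
  (match b with None => True | Some b' => x < b' end).

Definition Gm (per : bool) (J : nat) (bc : bool -> bctype) (f : R -> R) (X om : nat -> vec) (km : nat -> R) : R :=
  lump J (p1 J (fun j => vdot (X j) e1))
         (fun j x => p1 J (fun i => f (km i - Kop per J bc X om km i)) j x * lenrho J X j)
  / l2aff J (p1 J (fun j => vdot (X j) e1)) (fun j _ => lenrho J X j).

Definition is_solution (per : bool) (J : nat) (bc : bool -> bctype) (rho : bool -> R) (a b : option R) (f : R -> R)
    (theta : R) (X om : nat -> vec) (km : nat -> R) (dt : R)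
    (dX : nat -> vec) (k : nat -> R) : Prop :=
  let Xn := fun j => vadd (X j) (dX j) in
  inVVh_d per J bc dX /\ inVh per J k /\
  (forall j, (j <= J)%nat -> inab a b (k j - Kop per J bc X om k j)) /\
  (forall chi, inVh per J chi ->
     vlump J (vp1 J (fun j => vscal (/ dt) (vsub (Xn j) (X j))))
             (fun j x => vscal (p1 J chi j x * lenrho J X j) (nu J X j))
     = lump J (p1 J (fun i => f (k i - Kop per J bc X om k i)))
              (fun j x => p1 J chi j x * lenrho J X j)
       - theta * Gm per J bc f X om km * lump J (p1 J chi) (fun j _ => lenrho J X j)) /\
  (forall eta, inVVh_d per J bc eta ->
     vlump J (fun j x => vscal (p1 J k j x) (nu J X j))
             (fun j x => vscal (lenrho J X j) (vp1 J eta j x))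
     + vl2aff J (fun j _ => vdrho J Xn j)
                (fun j _ => vscal (/ lenrho J X j) (vdrho J eta j))
     = bdry_rhs per J bc rho eta).

(* Main.v *)
Require Import Defs.
From Stdlib Require Import Reals Lra Lia List Arith Bool ClassicalEpsilon.
Open Scope R_scope.


Fixpoint nsum (n : nat) (F : nat -> R) : R :=
  match n with O => 0 | S k => nsum k F + F k end.

Lemma sum_el_ext n F G : (forall j, (1 <= j <= n)%nat -> F j = G j) -> sum_el n F = sum_el n G.
Proof.
  induction n; intros H; simpl; auto.
  rewrite IHn by (intros; apply H; lia). rewrite (H (S n)) by lia. auto.
Qed.

Lemma nsum_ext n F G : (forall i, (i < n)%nat -> F i = G i) -> nsum n F = nsum n G.
Proof.
  induction n; intros H; simpl; auto.
  rewrite IHn by (intros; apply H; lia). rewrite (H n) by lia. auto.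
Qed.

Lemma sum_el_plus n F G : sum_el n (fun j => F j + G j) = sum_el n F + sum_el n G.
Proof. induction n; simpl; [ring|rewrite IHn; ring]. Qed.
Lemma nsum_plus n F G : nsum n (fun j => F j + G j) = nsum n F + nsum n G.
Proof. induction n; simpl; [ring|rewrite IHn; ring]. Qed.
Lemma sum_el_scal n c F : sum_el n (fun j => c * F j) = c * sum_el n F.
Proof. induction n; simpl; [ring|rewrite IHn; ring]. Qed.
Lemma nsum_scal n c F : nsum n (fun j => c * F j) = c * nsum n F.
Proof. induction n; simpl; [ring|rewrite IHn; ring]. Qed.
Lemma sum_el_opp n F : sum_el n (fun j => - F j) = - sum_el n F.
Proof. induction n; simpl; [ring|rewrite IHn; ring]. Qed.
Lemma nsum_opp n F : nsum n (fun j => - F j) = - nsum n F.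
Proof. induction n; simpl; [ring|rewrite IHn; ring]. Qed.
Lemma nsum_minus n F G : nsum n (fun j => F j - G j) = nsum n F - nsum n G.
Proof. induction n; simpl; [ring|rewrite IHn; ring]. Qed.
Lemma sum_el_minus n F G : sum_el n (fun j => F j - G j) = sum_el n F - sum_el n G.
Proof. induction n; simpl; [ring|rewrite IHn; ring]. Qed.

Lemma sum_el_nsum n F : sum_el n F = nsum n (fun i => F (S i)).
Proof. induction n; simpl; auto. rewrite IHn; auto. Qed.

Lemma nsum_shift n F : nsum (S n) F = F O + nsum n (fun i => F (S i)).
Proof. induction n; simpl in *; [ring|]. rewrite IHn. ring. Qed.

Lemma nsum_nonneg n F : (forall i, (i < n)%nat -> 0 <= F i) -> 0 <= nsum n F.
Proof. induction n; intros H; simpl; [lra|]. assert (0 <= F n) by (apply H; lia).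
  assert (0 <= nsum n F) by (apply IHn; intros; apply H; lia). lra. Qed.

Lemma nsum_le n F G : (forall i, (i < n)%nat -> F i <= G i) -> nsum n F <= nsum n G.
Proof. induction n; intros H; simpl; [lra|]. assert (F n <= G n) by (apply H; lia).
  assert (nsum n F <= nsum n G) by (apply IHn; intros; apply H; lia). lra. Qed.

Lemma sum_el_le n F G : (forall j, (1 <= j <= n)%nat -> F j <= G j) -> sum_el n F <= sum_el n G.
Proof. induction n; intros H; simpl; [lra|]. assert (F (S n) <= G (S n)) by (apply H; lia).
  assert (sum_el n F <= sum_el n G) by (apply IHn; intros; apply H; lia). lra. Qed.

Lemma sum_el_nonneg n F : (forall j, (1 <= j <= n)%nat -> 0 <= F j) -> 0 <= sum_el n F.
Proof. intros H. replace 0 with (sum_el n (fun _ => 0)). apply sum_el_le; auto.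
  induction n; simpl; auto. rewrite IHn; [ring|intros; apply H; lia]. Qed.

Lemma nsum_zero_each n F : (forall i, (i < n)%nat -> 0 <= F i) -> nsum n F = 0 ->
  forall i, (i < n)%nat -> F i = 0.
Proof.
  induction n; intros H0 H i Hi; [lia|]. simpl in H.
  assert (0 <= F n) by (apply H0; lia).
  assert (0 <= nsum n F) by (apply nsum_nonneg; intros; apply H0; lia).
  destruct (Nat.eq_dec i n); [subst; lra|].
  apply IHn; [intros; apply H0; lia|lra|lia].
Qed.

Lemma sum_el_zero_each n F : (forall j, (1 <= j <= n)%nat -> 0 <= F j) -> sum_el n F = 0 ->
  forall j, (1 <= j <= n)%nat -> F j = 0.
Proof.
  induction n; intros H0 H j Hj; [lia|]. simpl in H.
  assert (0 <= F (S n)) by (apply H0; lia).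
  assert (0 <= sum_el n F) by (apply sum_el_nonneg; intros; apply H0; lia).
  destruct (Nat.eq_dec j (S n)); [subst; lra|].
  apply IHn; [intros; apply H0; lia|lra|lia].
Qed.

Lemma nsum_term_le n F i : (forall k, (k < n)%nat -> 0 <= F k) -> (i < n)%nat -> F i <= nsum n F.
Proof.
  induction n; intros H Hi; [lia|]. simpl.
  assert (0 <= F n) by (apply H; lia).
  assert (0 <= nsum n F) by (apply nsum_nonneg; intros; apply H; lia).
  destruct (Nat.eq_dec i n); [subst; lra|].
  assert (F i <= nsum n F) by (apply IHn; [intros; apply H; lia|lia]). lra.
Qed.

Lemma sum_el_mono n m F : (m <= n)%nat -> (forall j, (1 <= j <= n)%nat -> 0 <= F j) ->
  sum_el m F <= sum_el n F.
Proof.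
  induction n; intros Hm H. replace m with O by lia. simpl; lra.
  destruct (Nat.eq_dec m (S n)); [subst; lra|]. simpl.
  assert (0 <= F (S n)) by (apply H; lia).
  assert (sum_el m F <= sum_el n F) by (apply IHn; [lia|intros; apply H; lia]). lra.
Qed.

Lemma nsum_abs n F : Rabs (nsum n F) <= nsum n (fun i => Rabs (F i)).
Proof. induction n; simpl. rewrite Rabs_R0; lra.
  eapply Rle_trans; [apply Rabs_triang|]. lra. Qed.

Lemma sum_el_abs n F : Rabs (sum_el n F) <= sum_el n (fun i => Rabs (F i)).
Proof. induction n; simpl. rewrite Rabs_R0; lra.
  eapply Rle_trans; [apply Rabs_triang|]. lra. Qed.

Definition Cw (J : nat) (c : nat -> R) (i : nat) : R :=
  (if (1 <=? i)%nat then c i else 0) + (if (i <? J)%nat then c (S i) else 0).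
Definition nf (per : bool) (J : nat) : nat := if per then J else S J.
Definition CE (per : bool) (J : nat) (C : nat -> R) (i : nat) : R :=
  if per && (i =? 0)%nat then C O + C J else C i.

Lemma node_conv_aux J c q :
  sum_el J (fun j => c j * q j + c j * q (j - 1)%nat) = nsum (S J) (fun i => Cw J c i * q i).
Proof.
  rewrite sum_el_plus, !sum_el_nsum.
  unfold Cw. rewrite (nsum_ext (S J) _ (fun i => (if (1 <=? i)%nat then c i * q i else 0)
                 + (if (i <? J)%nat then c (S i) * q i else 0))).
  2:{ intros i _. destruct (1 <=? i)%nat, (i <? J)%nat; ring. }
  rewrite nsum_plus. f_equal.
  - rewrite nsum_shift. simpl. rewrite Rplus_0_l. apply nsum_ext; intros; auto.
  - cbn [nsum]. rewrite Nat.ltb_irrefl, Rplus_0_r. apply nsum_ext. intros i Hi.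
    replace (i <? J)%nat with true by (symmetry; apply Nat.ltb_lt; lia).
    replace (S i - 1)%nat with i by lia. auto.
Qed.

Lemma node_conv per J c q : (1 <= J)%nat -> (per = true -> q J = q O) ->
  sum_el J (fun j => c j * q j + c j * q (j - 1)%nat) =
  nsum (nf per J) (fun i => CE per J (Cw J c) i * q i).
Proof.
  intros HJ Hq. rewrite node_conv_aux. unfold nf, CE. destruct per.
  - simpl. rewrite Hq by auto. destruct J; [lia|].
    rewrite !nsum_shift. cbn [nsum]. simpl (0 =? 0)%nat. simpl (if true then _ else _).
    rewrite (nsum_ext J (fun i => (if (S i =? 0)%nat then _ else _) * q (S i))
      (fun i => Cw (S J) c (S i) * q (S i))) by (intros; simpl; auto). ring.
  - simpl. auto.
Qed.

Lemma hh_pos J : (1 <= J)%nat -> 0 < hh J.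
Proof. intros. unfold hh. apply Rinv_0_lt_compat. apply lt_0_INR. lia. Qed.

Lemma node_diff J j : (1 <= J)%nat -> (1 <= j)%nat -> (node J j - node J (j - 1)) / hh J = 1.
Proof.
  intros HJ Hj. pose proof (hh_pos J HJ). destruct j as [|k]; [lia|].
  unfold node. replace (S k - 1)%nat with k by lia. rewrite S_INR. field. lra.
Qed.
Lemma node_diff0 J j : (1 <= J)%nat -> (node J (j - 1) - node J (j - 1)) / hh J = 0.
Proof. intros HJ. pose proof (hh_pos J HJ). replace (node J (j - 1) - node J (j - 1)) with 0 by ring. field. lra. Qed.

Lemma p1_R J v j : (1 <= J)%nat -> (1 <= j)%nat -> p1 J v j (node J j) = v j.
Proof.
  intros HJ Hj. pose proof (node_diff J j HJ Hj). pose proof (hh_pos J HJ). unfold p1.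
  replace ((v j - v (j - 1)%nat) * (node J j - node J (j - 1)) / hh J)
    with ((v j - v (j - 1)%nat) * ((node J j - node J (j - 1)) / hh J)) by (field; lra).
  rewrite H. ring.
Qed.
Lemma p1_L J v j : (1 <= J)%nat -> p1 J v j (node J (j - 1)) = v (j - 1)%nat.
Proof.
  intros HJ. pose proof (hh_pos J HJ). unfold p1.
  replace (node J (j - 1) - node J (j - 1)) with 0 by ring. field. lra.
Qed.
Lemma vp1_R J V j : (1 <= J)%nat -> (1 <= j)%nat -> vp1 J V j (node J j) = V j.
Proof.
  intros HJ Hj. unfold vp1. rewrite node_diff by auto. unfold vadd, vscal, vsub.
  destruct (V j), (V (j - 1)%nat); simpl. f_equal; ring.
Qed.
Lemma vp1_L J V j : (1 <= J)%nat -> vp1 J V j (node J (j - 1)) = V (j - 1)%nat.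
Proof.
  intros HJ. unfold vp1. rewrite node_diff0 by auto. unfold vadd, vscal, vsub.
  destruct (V j), (V (j - 1)%nat); simpl. f_equal; ring.
Qed.

Section Nodal.
Variable per : bool.
Variable J : nat.
Variable X : nat -> vec.
Hypothesis HJ : (1 <= J)%nat.

Definition len j := lenrho J X j.
Definition cN1 j := hh J / 2 * len j * fst (nu J X j).
Definition cN2 j := hh J / 2 * len j * snd (nu J X j).
Definition cM j := hh J / 2 * len j.
Definition NE (i : nat) : vec := (CE per J (Cw J cN1) i, CE per J (Cw J cN2) i).
Definition ME (i : nat) : R := CE per J (Cw J cM) i.

Lemma N1 V chi : inVVh per J V -> inVh per J chi ->
  vlump J (vp1 J V) (fun j x => vscal (p1 J chi j x * lenrho J X j) (nu J X j))
  = nsum (nf per J) (fun i => chi i * vdot (NE i) (V i)).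
Proof.
  intros HV Hc. unfold vlump. rewrite <- sum_el_scal.
  rewrite (sum_el_ext J _ (fun j => (cN1 j * (chi j * fst (V j)) + cN1 j * (chi (j-1)%nat * fst (V (j-1)%nat)))
     + (cN2 j * (chi j * snd (V j)) + cN2 j * (chi (j-1)%nat * snd (V (j-1)%nat))))).
  - rewrite sum_el_plus, !(node_conv per) by (auto; intros Hp; rewrite (Hc Hp), (HV Hp); auto).
    rewrite <- nsum_plus. apply nsum_ext. intros i _. unfold vdot, NE. simpl. ring.
  - intros j Hj. rewrite !vp1_R, !vp1_L, !p1_R, !p1_L by lia.
    unfold vdot, vscal, cN1, cN2, len. simpl. ring.
Qed.

Lemma N2 F chi : inVh per J F -> inVh per J chi ->
  lump J (p1 J F) (fun j x => p1 J chi j x * lenrho J X j)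
  = nsum (nf per J) (fun i => ME i * (chi i * F i)).
Proof.
  intros HF Hc. unfold lump. rewrite <- sum_el_scal.
  rewrite (sum_el_ext J _ (fun j => cM j * (chi j * F j) + cM j * (chi (j-1)%nat * F (j-1)%nat))).
  - rewrite (node_conv per) by (auto; intros Hp; rewrite (Hc Hp), (HF Hp); auto).
    apply nsum_ext. intros i _. unfold ME. ring.
  - intros j Hj. rewrite !p1_R, !p1_L by lia. unfold cM, len. ring.
Qed.

Lemma N3 chi : inVh per J chi ->
  lump J (p1 J chi) (fun j _ => lenrho J X j) = nsum (nf per J) (fun i => ME i * chi i).
Proof.
  intros Hc. unfold lump. rewrite <- sum_el_scal.
  rewrite (sum_el_ext J _ (fun j => cM j * chi j + cM j * chi (j-1)%nat)).
  - rewrite (node_conv per) by (auto; intros Hp; rewrite (Hc Hp); auto).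
    apply nsum_ext. intros i _. unfold ME. ring.
  - intros j Hj. rewrite !p1_R, !p1_L by lia. unfold cM, len. ring.
Qed.

Lemma N4 k eta : inVh per J k -> inVVh per J eta ->
  vlump J (fun j x => vscal (p1 J k j x) (nu J X j)) (fun j x => vscal (lenrho J X j) (vp1 J eta j x))
  = nsum (nf per J) (fun i => k i * vdot (NE i) (eta i)).
Proof.
  intros Hk HV. unfold vlump. rewrite <- sum_el_scal.
  rewrite (sum_el_ext J _ (fun j => (cN1 j * (k j * fst (eta j)) + cN1 j * (k (j-1)%nat * fst (eta (j-1)%nat)))
     + (cN2 j * (k j * snd (eta j)) + cN2 j * (k (j-1)%nat * snd (eta (j-1)%nat))))).
  - rewrite sum_el_plus, !(node_conv per) by (auto; intros Hp; rewrite (Hk Hp), (HV Hp); auto).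
    rewrite <- nsum_plus. apply nsum_ext. intros i _. unfold vdot, NE. simpl. ring.
  - intros j Hj. rewrite !vp1_R, !vp1_L, !p1_R, !p1_L by lia.
    unfold vdot, vscal, cN1, cN2, len. simpl. ring.
Qed.

Lemma N5 chi : inVh per J chi ->
  Bvec J X chi = (nsum (nf per J) (fun i => chi i * fst (NE i)), nsum (nf per J) (fun i => chi i * snd (NE i))).
Proof.
  intros Hc. unfold Bvec. f_equal.
  - unfold lump. rewrite <- sum_el_scal.
    rewrite (sum_el_ext J _ (fun j => cN1 j * chi j + cN1 j * chi (j-1)%nat)).
    + rewrite (node_conv per) by (auto; intros Hp; rewrite (Hc Hp); auto).
      apply nsum_ext. intros i _. unfold NE. simpl. ring.
    + intros j Hj. rewrite !p1_R, !p1_L by lia. unfold cN1, len. ring.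
  - unfold lump. rewrite <- sum_el_scal.
    rewrite (sum_el_ext J _ (fun j => cN2 j * chi j + cN2 j * chi (j-1)%nat)).
    + rewrite (node_conv per) by (auto; intros Hp; rewrite (Hc Hp); auto).
      apply nsum_ext. intros i _. unfold NE. simpl. ring.
    + intros j Hj. rewrite !p1_R, !p1_L by lia. unfold cN2, len. ring.
Qed.

End Nodal.


Definition contF (n : nat) (F : (nat -> R) -> R) : Prop :=
  forall x eps, 0 < eps -> exists del, 0 < del /\
    forall y, (forall i, (i < n)%nat -> Rabs (y i - x i) < del) -> Rabs (F y - F x) < eps.

Definition contR (g : R -> R) : Prop :=
  forall a eps, 0 < eps -> exists d, 0 < d /\ forall b, Rabs (b - a) < d -> Rabs (g b - g a) < eps.

Section ContF.
Variable n : nat.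

Lemma contF_const c : contF n (fun _ => c).
Proof. intros x eps He. exists 1. split; [lra|]. intros. replace (c - c) with 0 by ring. rewrite Rabs_R0; lra. Qed.

Lemma contF_proj i : (i < n)%nat -> contF n (fun x => x i).
Proof. intros Hi x eps He. exists eps. split; auto. Qed.

Lemma contF_plus F G : contF n F -> contF n G -> contF n (fun x => F x + G x).
Proof.
  intros cF cG x eps He.
  destruct (cF x (eps/2)) as [d1 [d1p H1]]; [lra|].
  destruct (cG x (eps/2)) as [d2 [d2p H2]]; [lra|].
  exists (Rmin d1 d2). split; [apply Rmin_glb_lt; auto|].
  intros y Hy.
  assert (A1 := H1 y (fun i Hi => Rlt_le_trans _ _ _ (Hy i Hi) (Rmin_l _ _))).
  assert (A2 := H2 y (fun i Hi => Rlt_le_trans _ _ _ (Hy i Hi) (Rmin_r _ _))).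
  replace (F y + G y - (F x + G x)) with ((F y - F x) + (G y - G x)) by ring.
  eapply Rle_lt_trans; [apply Rabs_triang|]. lra.
Qed.

Lemma contF_opp F : contF n F -> contF n (fun x => - F x).
Proof.
  intros cF x eps He. destruct (cF x eps He) as [d [dp H]]. exists d. split; auto.
  intros y Hy. replace (- F y - - F x) with (- (F y - F x)) by ring. rewrite Rabs_Ropp. auto.
Qed.

Lemma contF_minus F G : contF n F -> contF n G -> contF n (fun x => F x - G x).
Proof. intros. apply (contF_plus F (fun x => - G x)); auto. apply contF_opp; auto. Qed.

Lemma contF_mult F G : contF n F -> contF n G -> contF n (fun x => F x * G x).
Proof.
  intros cF cG x eps He.
  set (a := Rabs (F x)). set (b := Rabs (G x)).
  assert (a0 : 0 <= a) by apply Rabs_pos. assert (b0 : 0 <= b) by apply Rabs_pos.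
  destruct (cF x (eps / (2 * (b + 1)))) as [d1 [d1p H1]].
  { apply Rdiv_lt_0_compat; lra. }
  destruct (cG x (Rmin 1 (eps / (2 * (a + 1))))) as [d2 [d2p H2]].
  { apply Rmin_glb_lt; [lra|]. apply Rdiv_lt_0_compat; lra. }
  exists (Rmin d1 d2). split; [apply Rmin_glb_lt; auto|].
  intros y Hy.
  assert (A1 := H1 y (fun i Hi => Rlt_le_trans _ _ _ (Hy i Hi) (Rmin_l _ _))).
  assert (A2 := H2 y (fun i Hi => Rlt_le_trans _ _ _ (Hy i Hi) (Rmin_r _ _))).
  assert (A3 : Rabs (G y - G x) < 1) by (eapply Rlt_le_trans; [apply A2| apply Rmin_l]).
  assert (A4 : Rabs (G y - G x) < eps / (2 * (a + 1))) by (eapply Rlt_le_trans; [apply A2| apply Rmin_r]).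
  assert (A5 : Rabs (G y) <= b + 1).
  { replace (G y) with (G x + (G y - G x)) by ring.
    eapply Rle_trans; [apply Rabs_triang|]. unfold b; lra. }
  replace (F y * G y - F x * G x) with ((F y - F x) * G y + F x * (G y - G x)) by ring.
  eapply Rle_lt_trans; [apply Rabs_triang|]. rewrite !Rabs_mult.
  assert (B1 : Rabs (F y - F x) * Rabs (G y) < eps / (2 * (b + 1)) * (b + 1)).
  { apply Rle_lt_trans with (Rabs (F y - F x) * (b + 1)).
    - apply Rmult_le_compat_l; [apply Rabs_pos|lra].
    - apply Rmult_lt_compat_r; lra. }
  assert (B2 : Rabs (F x) * Rabs (G y - G x) <= a * (eps / (2 * (a + 1)))).
  { apply Rmult_le_compat; try apply Rabs_pos; [unfold a; lra|lra]. }
  assert (B3 : eps / (2 * (b + 1)) * (b + 1) = eps / 2) by (field; lra).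
  assert (B4 : a * (eps / (2 * (a + 1))) < eps / 2).
  { replace (a * (eps / (2 * (a + 1)))) with (eps / 2 * (a / (a + 1))) by (field; lra).
    assert (a / (a + 1) < 1).
    { apply (Rmult_lt_reg_r (a + 1)); [lra|]. unfold Rdiv. rewrite Rmult_assoc, Rinv_l; lra. }
    nra. }
  lra.
Qed.

Lemma contF_comp g F : contR g -> contF n F -> contF n (fun x => g (F x)).
Proof.
  intros cg cF x eps He. destruct (cg (F x) eps He) as [d [dp H]].
  destruct (cF x d dp) as [d' [d'p H']]. exists d'. split; auto.
Qed.

Lemma contF_if (b : bool) F G : contF n F -> contF n G -> contF n (fun x => if b then F x else G x).
Proof. destruct b; auto. Qed.

Lemma contF_sum_el m F : (forall j, (1 <= j <= m)%nat -> contF n (F j)) ->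
  contF n (fun x => sum_el m (fun j => F j x)).
Proof.
  induction m; intros H; simpl. apply contF_const.
  apply (contF_plus (fun x => sum_el m (fun j => F j x)) (F (S m))).
  apply IHm; intros; apply H; lia. apply H; lia.
Qed.

Lemma contF_nsum m F : (forall i, (i < m)%nat -> contF n (F i)) ->
  contF n (fun x => nsum m (fun i => F i x)).
Proof.
  induction m; intros H; simpl. apply contF_const.
  apply (contF_plus (fun x => nsum m (fun i => F i x)) (F m)).
  apply IHm; intros; apply H; lia. apply H; lia.
Qed.
End ContF.

Lemma limit0 (D : R -> R) : contF 1 (fun x => D (x O)) -> (forall t, 0 <= t * D t) -> D 0 = 0.
Proof.
  intros cD H.
  destruct (Rtotal_order (D 0) 0) as [Hl|[He|Hg]]; auto.
  - destruct (cD (fun _ => 0) (- D 0)) as [d [dp Hd]]; [lra|].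
    assert (A := Hd (fun _ => d / 2)). simpl in A.
    assert (Rabs (D (d / 2) - D 0) < - D 0).
    { apply A. intros i Hi. rewrite Rabs_right; lra. }
    assert (B := H (d / 2)).
    destruct (Rcase_abs (D (d / 2) - D 0)) as [r|r]; [rewrite Rabs_left in H0 by lra|rewrite Rabs_right in H0 by lra]; nra.
  - destruct (cD (fun _ => 0) (D 0)) as [d [dp Hd]]; [lra|].
    assert (A := Hd (fun _ => - (d / 2))). simpl in A.
    assert (Rabs (D (- (d / 2)) - D 0) < D 0).
    { apply A. intros i Hi. rewrite Rabs_left; lra. }
    assert (B := H (- (d / 2))).
    destruct (Rcase_abs (D (- (d / 2)) - D 0)) as [r|r]; [rewrite Rabs_left in H0 by lra|rewrite Rabs_right in H0 by lra]; nra.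
Qed.

Module CQ.
From Coquelicot Require Import Coquelicot.
Set Bullet Behavior "Strict Subproofs".

Lemma contR_cont g x : contR g -> continuous g x.
Proof.
  intros cg. apply continuity_pt_filterlim.
  unfold continuity_pt, continue_in, limit1_in, limit_in. intros eps He.
  destruct (cg x eps He) as [d [dp H]]. exists d. split; auto.
  intros y [_ Hy]. simpl in *. unfold R_dist in *. apply H. auto.
Qed.

Lemma exR g a b : contR g -> ex_RInt g a b.
Proof. intros cg. apply (@ex_RInt_continuous R_CompleteNormedModule). intros; apply contR_cont; auto. Qed.

Definition Gint (g : R -> R) (y : R) : R := RInt g 0 y.

Section Integral.
Variable g : R -> R.
Hypothesis cg : contR g.
Hypothesis mg : forall x y, x <= y -> g x <= g y.

Lemma RInt_bounds a b : a <= b -> g a * (b - a) <= RInt g a b <= g b * (b - a).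
Proof.
  intros Hab. split.
  - replace (g a * (b - a)) with (RInt (fun _ => g a) a b).
    2:{ rewrite RInt_const. simpl. unfold scal; simpl; unfold mult; simpl. ring. }
    apply RInt_le; auto. apply ex_RInt_const. apply exR; auto.
    intros x [H1 H2]. apply mg; lra.
  - replace (g b * (b - a)) with (RInt (fun _ => g b) a b).
    2:{ rewrite RInt_const. simpl. unfold scal; simpl; unfold mult; simpl. ring. }
    apply RInt_le; auto. apply exR; auto. apply ex_RInt_const.
    intros x [H1 H2]. apply mg; lra.
Qed.

Lemma Gint_diff y Y : Gint g y - Gint g Y = RInt g Y y.
Proof.
  unfold Gint. rewrite <- (RInt_Chasles g 0 Y y) by (apply exR; auto).
  simpl. unfold plus; simpl. ring.
Qed.

Lemma Gint_supp y Y : g Y * (y - Y) <= Gint g y - Gint g Y <= g y * (y - Y).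
Proof.
  rewrite Gint_diff. destruct (Rle_dec Y y).
  - apply RInt_bounds; auto.
  - assert (Hb := RInt_bounds y Y ltac:(lra)).
    rewrite <- opp_RInt_swap by (apply exR; auto). simpl. unfold opp; simpl. lra.
Qed.

Lemma Gint_cont : contR (Gint g).
Proof.
  intros Y eps He. destruct (cg Y 1 ltac:(lra)) as [d1 [d1p H1]].
  set (K := Rabs (g Y) + 2).
  assert (Kp : 0 < K) by (unfold K; pose proof (Rabs_pos (g Y)); lra).
  exists (Rmin d1 (eps / K)). split.
  { apply Rmin_glb_lt; auto. apply Rdiv_lt_0_compat; auto. }
  intros y Hy.
  assert (Hy1 : Rabs (y - Y) < d1) by (eapply Rlt_le_trans; [apply Hy|apply Rmin_l]).
  assert (Hy2 : Rabs (y - Y) < eps / K) by (eapply Rlt_le_trans; [apply Hy|apply Rmin_r]).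
  assert (Hg : Rabs (g y) <= K).
  { assert (Rabs (g y - g Y) < 1) by auto.
    replace (g y) with (g Y + (g y - g Y)) by ring.
    eapply Rle_trans; [apply Rabs_triang|]. unfold K; lra. }
  assert (HgY : Rabs (g Y) <= K) by (unfold K; lra).
  destruct (Gint_supp y Y) as [S1 S2].
  assert (T1 : Rabs (g Y * (y - Y)) <= K * Rabs (y - Y)).
  { rewrite Rabs_mult. apply Rmult_le_compat_r; [apply Rabs_pos|auto]. }
  assert (T2 : Rabs (g y * (y - Y)) <= K * Rabs (y - Y)).
  { rewrite Rabs_mult. apply Rmult_le_compat_r; [apply Rabs_pos|auto]. }
  assert (T3 : K * Rabs (y - Y) < eps).
  { apply Rlt_le_trans with (K * (eps / K)). apply Rmult_lt_compat_l; auto.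
    right. field. lra. }
  apply Rabs_def1.
  - apply Rle_lt_trans with (Rabs (g y * (y - Y))). 2: lra.
    eapply Rle_trans; [apply S2| apply Rle_abs].
  - apply Rlt_le_trans with (- Rabs (g Y * (y - Y))). lra.
    apply Rle_trans with (g Y * (y - Y)). 2: apply S1.
    pose proof (Rle_abs (- (g Y * (y - Y)))). rewrite Rabs_Ropp in H. lra.
Qed.

Lemma Gint_lin L yp ym : 0 <= L -> g yp = L -> g ym = - L ->
  exists C, forall y, L * Rabs y - C <= Gint g y.
Proof.
  intros L0 Hp Hm.
  exists (Rabs (Gint g yp) + L * Rabs yp + Rabs (Gint g ym) + L * Rabs ym).
  intros y. destruct (Gint_supp y yp) as [S1 _]. destruct (Gint_supp y ym) as [S2 _].
  rewrite Hp in S1. rewrite Hm in S2.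
  pose proof (Rle_abs (Gint g yp)). pose proof (Rle_abs (- Gint g yp)). rewrite Rabs_Ropp in H0.
  pose proof (Rle_abs (Gint g ym)). pose proof (Rle_abs (- Gint g ym)). rewrite Rabs_Ropp in H2.
  pose proof (Rle_abs yp). pose proof (Rle_abs (- yp)). rewrite Rabs_Ropp in H4.
  pose proof (Rle_abs ym). pose proof (Rle_abs (- ym)). rewrite Rabs_Ropp in H6.
  unfold Rabs at 1. destruct (Rcase_abs y); nra.
Qed.
End Integral.

End CQ.
Import CQ.
Set Bullet Behavior "Strict Subproofs".


Definition vlin (Y eta : nat -> vec) (t : R) : nat -> vec := fun j => vadd (Y j) (vscal t (eta j)).

Section Stiff.
Variable J : nat.
Variable X : nat -> vec.
Hypothesis HJ : (1 <= J)%nat.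

Definition BB (Z eta : nat -> vec) : R :=
  vl2aff J (fun j _ => vdrho J Z j) (fun j _ => vscal (/ lenrho J X j) (vdrho J eta j)).

Lemma BB_el Z eta : BB Z eta = sum_el J (fun j => hh J * vdot (vdrho J Z j) (vscal (/ lenrho J X j) (vdrho J eta j))).
Proof. unfold BB, vl2aff. apply sum_el_ext. intros. field. Qed.

Lemma vdrho_lin Y eta t j : vdrho J (vlin Y eta t) j = vadd (vdrho J Y j) (vscal t (vdrho J eta j)).
Proof. unfold vdrho, vlin, vadd, vscal, vsub. simpl. f_equal; ring. Qed.

Lemma BB_expand Z eta t :
  BB (vlin Z eta t) (vlin Z eta t) = BB Z Z + 2 * t * BB Z eta + t * t * BB eta eta.
Proof.
  rewrite !BB_el. rewrite <- !sum_el_scal, <- !sum_el_plus. apply sum_el_ext. intros j _.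
  rewrite !vdrho_lin. unfold vdot, vadd, vscal. simpl. ring.
Qed.

Lemma BB_diff Z1 Z2 eta :
  BB Z1 eta - BB Z2 eta = BB (fun j => vsub (Z1 j) (Z2 j)) eta.
Proof.
  rewrite !BB_el, <- sum_el_minus. apply sum_el_ext. intros j _.
  unfold vdrho, vdot, vsub, vscal. simpl. ring.
Qed.

Lemma BB_ext Z Z' eta eta' : (forall j, (j <= J)%nat -> Z j = Z' j /\ eta j = eta' j) ->
  BB Z eta = BB Z' eta'.
Proof.
  intros H. rewrite !BB_el. apply sum_el_ext. intros j Hj.
  destruct (H j) as [H1 H2]; [lia|]. destruct (H (j-1)%nat) as [H3 H4]; [lia|].
  unfold vdrho. rewrite H1, H2, H3, H4. auto.
Qed.

Hypothesis Hlen : forall j, (1 <= j <= J)%nat -> 0 < lenrho J X j.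

Lemma BB_self_el eta j : (1 <= j <= J)%nat ->
  hh J * vdot (vdrho J eta j) (vscal (/ lenrho J X j) (vdrho J eta j))
  = hh J / lenrho J X j * (fst (vdrho J eta j) ^ 2 + snd (vdrho J eta j) ^ 2).
Proof. intros Hj. pose proof (Hlen j Hj). unfold vdot, vscal. simpl. pose proof (hh_pos J HJ). field. split; lra. Qed.

Lemma BB_self_el_nonneg eta j : (1 <= j <= J)%nat ->
  0 <= hh J * vdot (vdrho J eta j) (vscal (/ lenrho J X j) (vdrho J eta j)).
Proof.
  intros Hj. rewrite BB_self_el by auto.
  pose proof (Hlen j Hj). pose proof (hh_pos J HJ).
  apply Rmult_le_pos. apply Rlt_le, Rdiv_lt_0_compat; lra. nra.
Qed.

Lemma BB_self_nonneg eta : 0 <= BB eta eta.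
Proof. rewrite BB_el. apply sum_el_nonneg. intros j Hj. apply BB_self_el_nonneg; auto. Qed.

Lemma BB_self_zero eta : BB eta eta = 0 -> forall j, (j <= J)%nat -> eta j = eta O.
Proof.
  intros H. rewrite BB_el in H.
  assert (Hz := sum_el_zero_each J _ (fun j Hj => BB_self_el_nonneg eta j Hj) H).
  assert (Hs : forall j, (1 <= j <= J)%nat -> eta j = eta (j - 1)%nat).
  { intros j Hj. specialize (Hz j Hj). cbv beta in Hz. rewrite BB_self_el in Hz by auto.
    pose proof (Hlen j Hj). pose proof (hh_pos J HJ).
    assert (hh J / lenrho J X j > 0) by (apply Rdiv_lt_0_compat; lra).
    assert (fst (vdrho J eta j) ^ 2 + snd (vdrho J eta j) ^ 2 = 0).
    { apply (Rmult_eq_reg_l (hh J / lenrho J X j)); lra. }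
    assert (E1 : fst (vdrho J eta j) = 0) by nra. assert (E2 : snd (vdrho J eta j) = 0) by nra.
    unfold vdrho, vscal, vsub in E1, E2. simpl in E1, E2.
    assert (Hi : / hh J <> 0) by (apply Rinv_neq_0_compat; lra).
    destruct (eta j), (eta (j - 1)%nat). simpl in *. f_equal.
    - apply Rmult_integral in E1. destruct E1; [contradiction|lra].
    - apply Rmult_integral in E2. destruct E2; [contradiction|lra]. }
  intros j. induction j; intros Hj; auto.
  rewrite (Hs (S j)) by lia. replace (S j - 1)%nat with j by lia. apply IHj. lia.
Qed.
End Stiff.

Lemma bdry_lin per J bc rho Y eta t :
  bdry_rhs per J bc rho (vlin Y eta t) = bdry_rhs per J bc rho Y + t * bdry_rhs per J bc rho eta.
Proof.
  unfold bdry_rhs, vlin. destruct per; [ring|].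
  destruct (bc false), (bc true); unfold vdot, vadd, vscal; simpl; ring.
Qed.

Lemma bdry_ext per J bc rho Y Y' : (forall j, (j <= J)%nat -> Y j = Y' j) ->
  bdry_rhs per J bc rho Y = bdry_rhs per J bc rho Y'.
Proof.
  intros H. unfold bdry_rhs, bnode. rewrite (H O), (H J) by lia. auto.
Qed.


Lemma bterm_bound (c : bctype) r v : Rabs r <= 1 ->
  Rabs (match c with Defs.B1 => r * vdot v e2 | Defs.B2 => r * vdot v e1 | _ => 0 end) <= Rabs (fst v) + Rabs (snd v).
Proof.
  intros Hr. pose proof (Rabs_pos (fst v)). pose proof (Rabs_pos (snd v)).
  destruct c; unfold vdot, e1, e2; simpl; try (rewrite Rabs_R0; lra).
  - replace (fst v * 0 + snd v * 1) with (snd v) by ring. rewrite Rabs_mult.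
    pose proof (Rabs_pos r). pose proof (Rabs_pos (snd v)). nra.
  - replace (fst v * 1 + snd v * 0) with (fst v) by ring. rewrite Rabs_mult.
    pose proof (Rabs_pos r). pose proof (Rabs_pos (fst v)). nra.
Qed.

Lemma bdry_bound per J bc rho Y : (forall p, Rabs (rho p) <= 1) ->
  Rabs (bdry_rhs per J bc rho Y) <=
  Rabs (fst (Y O)) + Rabs (snd (Y O)) + Rabs (fst (Y J)) + Rabs (snd (Y J)).
Proof.
  intros Hr. pose proof (Rabs_pos (fst (Y O))). pose proof (Rabs_pos (snd (Y O))).
  pose proof (Rabs_pos (fst (Y J))). pose proof (Rabs_pos (snd (Y J))).
  unfold bdry_rhs. destruct per. rewrite Rabs_R0; lra.
  rewrite Rabs_Ropp. eapply Rle_trans; [apply Rabs_triang|].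
  pose proof (bterm_bound (bc false) (rho false) (Y (bnode J false)) (Hr false)).
  pose proof (bterm_bound (bc true) (rho true) (Y (bnode J true)) (Hr true)).
  simpl in *. lra.
Qed.


Lemma nsum_prod_bound n a w :
  Rabs (nsum n (fun i => a i * w i)) <= nsum n (fun i => Rabs (a i)) * nsum n (fun i => Rabs (w i)).
Proof.
  eapply Rle_trans; [apply nsum_abs|].
  rewrite Rmult_comm, <- nsum_scal. apply nsum_le. intros i Hi.
  rewrite Rabs_mult, (Rmult_comm (Rabs (a i))). apply Rmult_le_compat_r; [apply Rabs_pos|].
  apply (nsum_term_le n (fun i => Rabs (w i))); auto. intros; apply Rabs_pos.
Qed.

Section Span.
Variable per : bool.
Variable J : nat.
Variable X : nat -> vec.
Hypothesis HJ : (1 <= J)%nat.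

Definition Wc (c : vec) : R := nsum (nf per J) (fun i => Rabs (vdot (NE per J X i) c)).

Lemma vdot_Bvec c chi : inVh per J chi ->
  vdot c (Bvec J X chi) = nsum (nf per J) (fun i => chi i * vdot (NE per J X i) c).
Proof.
  intros Hc. rewrite (N5 per) by auto. unfold vdot. simpl.
  rewrite <- !nsum_scal, <- nsum_plus. apply nsum_ext. intros. ring.
Qed.

Definition foldB (l : list (R * (nat -> R))) : vec :=
  fold_right (fun pc acc => vadd (vscal (fst pc) (Bvec J X (snd pc))) acc) (0, 0) l.

Lemma fold_bound l : Forall (fun pc => inVh per J (snd pc)) l ->
  exists K, 0 <= K /\ forall c, Rabs (vdot c (foldB l)) <= K * Wc c.
Proof.
  induction l as [|[lam chi] l IH]; intros HF.
  - exists 0. split; [lra|]. intros c. unfold vdot; simpl.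
    replace (fst c * 0 + snd c * 0) with 0 by ring. rewrite Rabs_R0. lra.
  - inversion HF; subst. destruct (IH H2) as [K [K0 HK]]. simpl in H1.
    exists (Rabs lam * nsum (nf per J) (fun i => Rabs (chi i)) + K). split.
    { pose proof (Rabs_pos lam). assert (0 <= nsum (nf per J) (fun i => Rabs (chi i)))
        by (apply nsum_nonneg; intros; apply Rabs_pos). nra. }
    intros c. simpl.
    replace (vdot c (vadd (vscal lam (Bvec J X chi)) (foldB l)))
      with (lam * vdot c (Bvec J X chi) + vdot c (foldB l))
      by (unfold vdot, vadd, vscal; simpl; ring).
    eapply Rle_trans; [apply Rabs_triang|]. rewrite Rabs_mult.
    rewrite vdot_Bvec by auto.
    pose proof (nsum_prod_bound (nf per J) chi (fun i => vdot (NE per J X i) c)).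
    pose proof (HK c). pose proof (Rabs_pos lam).
    fold (Wc c) in H.
    assert (Rabs lam * Rabs (nsum (nf per J) (fun i => chi i * vdot (NE per J X i) c))
            <= Rabs lam * (nsum (nf per J) (fun i => Rabs (chi i)) * Wc c))
      by (apply Rmult_le_compat_l; auto).
    nra.
Qed.

Lemma span_bound : assumpB per J X ->
  exists K, 0 < K /\ forall c : vec, Rabs (fst c) + Rabs (snd c) <= K * Wc c.
Proof.
  intros HB. destruct (HB e1) as [l1 [F1 E1]]. destruct (HB e2) as [l2 [F2 E2]].
  destruct (fold_bound l1 F1) as [K1 [K10 HK1]]. destruct (fold_bound l2 F2) as [K2 [K20 HK2]].
  exists (K1 + K2 + 1). split; [lra|]. intros c.
  assert (W0 : 0 <= Wc c) by (apply nsum_nonneg; intros; apply Rabs_pos).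
  specialize (HK1 c). specialize (HK2 c). fold (foldB l1) in E1. fold (foldB l2) in E2.
  rewrite <- E1 in HK1. rewrite <- E2 in HK2.
  unfold vdot, e1, e2 in HK1, HK2. simpl in HK1, HK2.
  replace (fst c * 1 + snd c * 0) with (fst c) in HK1 by ring.
  replace (fst c * 0 + snd c * 1) with (snd c) in HK2 by ring. nra.
Qed.

Lemma span_zero : assumpB per J X -> forall c,
  (forall chi, inVh per J chi -> vdot c (Bvec J X chi) = 0) -> c = (0, 0).
Proof.
  intros HB c Hc. destruct (HB c) as [l [F E]]. fold (foldB l) in E.
  assert (vdot c (foldB l) = 0).
  { clear E. induction l as [|[lam chi] l IH]; simpl.
    - unfold vdot; simpl; ring.
    - inversion F; subst. simpl in H1.
      replace (vdot c (vadd (vscal lam (Bvec J X chi)) (foldB l)))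
        with (lam * vdot c (Bvec J X chi) + vdot c (foldB l))
        by (unfold vdot, vadd, vscal; simpl; ring).
      rewrite Hc, IH by auto. ring. }
  rewrite <- E in H. unfold vdot in H. destruct c as [c1 c2]. simpl in H.
  f_equal; nra.
Qed.
End Span.

Lemma ME_pos per J X : (2 <= J)%nat -> (forall j, (1 <= j <= J)%nat -> 0 < lenrho J X j) ->
  forall i, (i < nf per J)%nat -> 0 < ME per J X i.
Proof.
  intros HJ Hl i Hi. assert (H1 : (1 <= J)%nat) by lia. pose proof (hh_pos J H1).
  assert (Hc : forall j, (1 <= j <= J)%nat -> 0 < cM J X j).
  { intros j Hj. unfold cM, len. pose proof (Hl j Hj). apply Rmult_lt_0_compat; lra. }
  assert (Hw : forall i, (i <= J)%nat -> 0 < Cw J (cM J X) i).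
  { intros k Hk. unfold Cw. destruct (1 <=? k)%nat eqn:E1; destruct (k <? J)%nat eqn:E2.
    - apply Nat.leb_le in E1. apply Nat.ltb_lt in E2. pose proof (Hc k ltac:(lia)). pose proof (Hc (S k) ltac:(lia)). lra.
    - apply Nat.leb_le in E1. pose proof (Hc k ltac:(lia)). lra.
    - apply Nat.ltb_lt in E2. pose proof (Hc (S k) ltac:(lia)). lra.
    - apply Nat.leb_gt in E1. apply Nat.ltb_ge in E2. lia. }
  unfold ME, CE, nf in *. destruct per; simpl.
  - destruct (i =? 0)%nat. pose proof (Hw O ltac:(lia)). pose proof (Hw J ltac:(lia)). lra.
    apply Hw; lia.
  - apply Hw; lia.
Qed.


Lemma contF_ext n F G : (forall x, F x = G x) -> contF n G -> contF n F.
Proof. intros H cG x eps He. destruct (cG x eps He) as [d [dp Hd]]. exists d. split; auto.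
  intros y Hy. rewrite !H. auto. Qed.

Lemma contR_ext g h : (forall x, g x = h x) -> contR h -> contR g.
Proof. intros H ch a eps He. destruct (ch a eps He) as [d [dp Hd]]. exists d. split; auto.
  intros b Hb. rewrite !H. auto. Qed.

Lemma contR_affine g a b : contR g -> contR (fun y => g (y * a + b)).
Proof.
  intros cg y eps He. destruct (cg (y * a + b) eps He) as [d [dp Hd]].
  exists (d / (Rabs a + 1)). split. apply Rdiv_lt_0_compat; [auto| pose proof (Rabs_pos a); lra].
  intros z Hz. apply Hd. replace (z * a + b - (y * a + b)) with ((z - y) * a) by ring.
  rewrite Rabs_mult. pose proof (Rabs_pos a). pose proof (Rabs_pos (z - y)).
  apply Rle_lt_trans with (Rabs (z - y) * (Rabs a + 1)). nra.
  apply Rlt_le_trans with (d / (Rabs a + 1) * (Rabs a + 1)).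
  apply Rmult_lt_compat_r; lra. right. field. lra.
Qed.

Lemma contR_post g a b : contR g -> contR (fun y => a * g y + b).
Proof.
  intros cg y eps He. destruct (cg y (eps / (Rabs a + 1))) as [d [dp Hd]].
  apply Rdiv_lt_0_compat; [auto| pose proof (Rabs_pos a); lra].
  exists d. split; auto. intros z Hz. specialize (Hd z Hz).
  replace (a * g z + b - (a * g y + b)) with (a * (g z - g y)) by ring.
  rewrite Rabs_mult. pose proof (Rabs_pos a). pose proof (Rabs_pos (g z - g y)).
  apply Rle_lt_trans with ((Rabs a + 1) * Rabs (g z - g y)). nra.
  apply Rlt_le_trans with ((Rabs a + 1) * (eps / (Rabs a + 1))).
  apply Rmult_lt_compat_l; lra. right. field. lra.
Qed.

Section Finv.
Variable f : R -> R.
Hypothesis Hinc : forall x y, x < y -> f x < f y.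
Hypothesis Hsur : forall y, exists x, f x = y.

Definition finv (y : R) : R := proj1_sig (constructive_indefinite_description _ (Hsur y)).
Lemma f_finv y : f (finv y) = y.
Proof. unfold finv. destruct (constructive_indefinite_description _ _). auto. Qed.
Lemma f_le x y : x <= y -> f x <= f y.
Proof. intros [H|H]; [left; auto| subst; lra]. Qed.
Lemma f_inj x y : f x = f y -> x = y.
Proof. intros H. destruct (Rtotal_order x y) as [h|[h|h]]; auto; apply Hinc in h; lra. Qed.
Lemma finv_f x : finv (f x) = x.
Proof. apply f_inj. apply f_finv. Qed.
Lemma finv_mono y1 y2 : y1 <= y2 -> finv y1 <= finv y2.
Proof. intros H. destruct (Rle_dec (finv y1) (finv y2)); auto.
  assert (finv y2 < finv y1) by lra. apply Hinc in H0. rewrite !f_finv in H0. lra. Qed.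
Lemma finv_cont : contR finv.
Proof.
  intros a eps He. set (x0 := finv a).
  assert (E0 : f x0 = a) by apply f_finv.
  assert (P1 : f x0 < f (x0 + eps)) by (apply Hinc; lra).
  assert (P2 : f (x0 - eps) < f x0) by (apply Hinc; lra).
  exists (Rmin (f (x0 + eps) - a) (a - f (x0 - eps))). split.
  { apply Rmin_glb_lt; lra. }
  intros b Hb. apply Rabs_def2 in Hb. destruct Hb as [Hb1 Hb2].
  assert (Q1 := Rmin_l (f (x0 + eps) - a) (a - f (x0 - eps))).
  assert (Q2 := Rmin_r (f (x0 + eps) - a) (a - f (x0 - eps))).
  apply Rabs_def1.
  - destruct (Rlt_dec (finv b) (x0 + eps)). fold x0; lra.
    assert (f (x0 + eps) <= f (finv b)) by (apply f_le; lra). rewrite f_finv in H. lra.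
  - destruct (Rlt_dec (x0 - eps) (finv b)). fold x0; lra.
    assert (f (finv b) <= f (x0 - eps)) by (apply f_le; lra). rewrite f_finv in H. lra.
Qed.
End Finv.


Section Exist.
Variable per : bool.
Variable J : nat.
Variable bc : bool -> bctype.
Variable rho : bool -> R.
Variable X om : nat -> vec.
Hypothesis HJ : (3 <= J)%nat.

Definition idx (j : nat) : nat := if per && (j =? J)%nat then O else j.
Definition c1 (j : nat) : bool :=
  negb (in_bd per J bc B0 j || in_bd per J bc Defs.B1 j || in_bd per J bc BD j).
Definition c2 (j : nat) : bool := negb (in_bd per J bc B2 j || in_bd per J bc BD j).
Definition Pv (x : nat -> R) (j : nat) : vec :=
  (if c1 (idx j) then x (2 * idx j)%nat else 0, if c2 (idx j) then x (S (2 * idx j)) else 0).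
Definition Qv (Y : nat -> vec) (i : nat) : R :=
  if Nat.even i then fst (Y (Nat.div2 i)) else snd (Y (Nat.div2 i)).
Definition nn : nat := (2 * S J)%nat.

Lemma in_bd_per k j : in_bd per J bc k j = true -> per = false.
Proof. unfold in_bd. destruct per; auto. Qed.

Lemma idx_le j : (idx j <= j)%nat.
Proof. unfold idx. destruct (per && (j =? J))%nat; lia. Qed.

Lemma idx_nf i : (i < nf per J)%nat -> idx i = i.
Proof. unfold idx, nf. intros H. destruct per; simpl; auto.
  destruct (i =? J)%nat eqn:E; auto. apply Nat.eqb_eq in E. lia. Qed.

Lemma Pv_W x : inVVh_d per J bc (Pv x).
Proof.
  unfold inVVh_d, inVVh_d0. split; [split|split; [|split]].
  - red; intros Hp. unfold Pv, idx. rewrite Hp. simpl. rewrite Nat.eqb_refl.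
    destruct J as [|J0]; [lia|]. reflexivity.
  - intros j Hj. pose proof (in_bd_per _ _ Hj) as Hp.
    assert (Ei : idx j = j) by (unfold idx; rewrite Hp; auto).
    unfold Pv, c1. rewrite Ei, Hj. simpl. unfold vdot, e1. simpl. ring.
  - intros j Hj. pose proof (in_bd_per _ _ Hj) as Hp.
    assert (Ei : idx j = j) by (unfold idx; rewrite Hp; auto).
    unfold Pv, c1. rewrite Ei, Hj, orb_true_r. simpl. unfold vdot, e1. simpl. ring.
  - intros j Hj. pose proof (in_bd_per _ _ Hj) as Hp.
    assert (Ei : idx j = j) by (unfold idx; rewrite Hp; auto).
    unfold Pv, c2. rewrite Ei, Hj. simpl. unfold vdot, e2. simpl. ring.
  - intros j Hj. pose proof (in_bd_per _ _ Hj) as Hp.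
    assert (Ei : idx j = j) by (unfold idx; rewrite Hp; auto).
    unfold Pv, c1, c2. rewrite Ei, Hj, !orb_true_r. simpl. auto.
Qed.

Lemma Qv_even Y i : Qv Y (2 * i)%nat = fst (Y i).
Proof. unfold Qv. rewrite Nat.even_even, Nat.div2_double. auto. Qed.
Lemma Qv_odd Y i : Qv Y (S (2 * i))%nat = snd (Y i).
Proof. unfold Qv. replace (S (2 * i)) with (2 * i + 1)%nat by lia.
  rewrite Nat.even_odd, Nat.div2_odd'. auto. Qed.

Lemma Pv_Qv Y : inVVh_d per J bc Y -> forall j, (j <= J)%nat -> Pv (Qv Y) j = Y j.
Proof.
  intros [[HV H0] [H1 [H2 HD]]] j Hj. unfold Pv. rewrite Qv_even, Qv_odd.
  case_eq per; intros Hp.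
  - assert (Hc1 : forall k, c1 k = true) by (intros; unfold c1, in_bd; rewrite Hp; auto).
    assert (Hc2 : forall k, c2 k = true) by (intros; unfold c2, in_bd; rewrite Hp; auto).
    rewrite Hc1, Hc2. unfold idx. rewrite Hp. simpl.
    destruct (j =? J)%nat eqn:E.
    + apply Nat.eqb_eq in E. subst j. rewrite HV by auto. destruct (Y O); auto.
    + destruct (Y j); auto.
  - assert (Ei : idx j = j) by (unfold idx; rewrite Hp; auto). rewrite Ei.
    unfold c1, c2.
    destruct (in_bd per J bc BD j) eqn:ED.
    { rewrite !orb_true_r. simpl. rewrite (HD j ED). auto. }
    rewrite !orb_false_r.
    assert (F1 : in_bd per J bc B0 j || in_bd per J bc Defs.B1 j = true -> fst (Y j) = 0).
    { intros Ho. apply orb_true_iff in Ho. destruct Ho as [Ho|Ho];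
        [specialize (H0 j Ho)|specialize (H1 j Ho)]; unfold vdot, e1 in *; simpl in *; lra. }
    assert (F2 : in_bd per J bc B2 j = true -> snd (Y j) = 0).
    { intros Ho. specialize (H2 j Ho). unfold vdot, e2 in *; simpl in *; lra. }
    destruct (in_bd per J bc B0 j || in_bd per J bc Defs.B1 j) eqn:Eo;
    destruct (in_bd per J bc B2 j) eqn:E2; simpl;
    (destruct (Y j) as [a b] eqn:EY; simpl in *; f_equal;
    try (symmetry; apply F1; auto); try (symmetry; apply F2; auto); auto).
Qed.

Lemma Pv_lin x y t j : Pv (fun i => x i + t * y i) j = vlin (Pv x) (Pv y) t j.
Proof. unfold Pv, vlin, vadd, vscal. destruct (c1 (idx j)), (c2 (idx j)); simpl; f_equal; ring. Qed.

Lemma Pv0 j : Pv (fun _ => 0) j = (0, 0).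
Proof. unfold Pv. destruct (c1 (idx j)), (c2 (idx j)); auto. Qed.

Lemma Qv_bound Y M : (forall j, (j <= J)%nat -> Rabs (fst (Y j)) <= M /\ Rabs (snd (Y j)) <= M) ->
  forall i, (i < nn)%nat -> Rabs (Qv Y i) <= M.
Proof.
  intros H i Hi. unfold nn in Hi.
  assert (Hd : (Nat.div2 i <= J)%nat).
  { pose proof (Nat.div2_odd i). destruct (Nat.odd i); simpl in H0; lia. }
  unfold Qv. destruct (Nat.even i); apply H; auto.
Qed.

Lemma contF_Pv1 j : (j <= J)%nat -> contF nn (fun x => fst (Pv x j)).
Proof.
  intros Hj. unfold Pv. simpl. apply contF_if; [apply contF_proj|apply contF_const].
  pose proof (idx_le j). unfold nn. lia.
Qed.
Lemma contF_Pv2 j : (j <= J)%nat -> contF nn (fun x => snd (Pv x j)).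
Proof.
  intros Hj. unfold Pv. simpl. apply contF_if; [apply contF_proj|apply contF_const].
  pose proof (idx_le j). unfold nn. lia.
Qed.


Variable f : R -> R.
Hypothesis Hinc : forall x y, x < y -> f x < f y.
Hypothesis Hsur : forall y, exists x, f x = y.
Variable km : nat -> R.
Variables dt theta : R.
Hypothesis Hdt : 0 < dt.
Hypothesis Hlen : forall j, (1 <= j <= J)%nat -> 0 < lenrho J X j.

Definition Gc : R := Gm per J bc f X om km.
Definition rr (i : nat) : R := vdot (om i) e1 / vdot (X i) e1.
Definition kv (i : nat) (s : R) : R :=
  if in_bd per J bc B0 i then finv f Hsur s / 2 else finv f Hsur s + rr i.
Definition phi (i : nat) (y : R) : R := kv i (y / (ME per J X i * dt) + theta * Gc).
Definition Phi (i : nat) (y : R) : R := Gint (phi i) y.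

Lemma MEdt_pos i : (i < nf per J)%nat -> 0 < ME per J X i * dt.
Proof. intros Hi. apply Rmult_lt_0_compat; auto. apply ME_pos; auto. lia. Qed.

Lemma phi_cont i : contR (phi i).
Proof.
  unfold phi, kv. destruct (in_bd per J bc B0 i).
  - apply (contR_ext _ (fun y => / 2 * finv f Hsur (y * / (ME per J X i * dt) + theta * Gc) + 0)).
    intros; unfold Rdiv; ring.
    apply (contR_post (fun y => finv f Hsur (y * / (ME per J X i * dt) + theta * Gc))).
    apply contR_affine. apply finv_cont; auto.
  - apply (contR_ext _ (fun y => 1 * finv f Hsur (y * / (ME per J X i * dt) + theta * Gc) + rr i)).
    intros; unfold Rdiv; ring.
    apply (contR_post (fun y => finv f Hsur (y * / (ME per J X i * dt) + theta * Gc))).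
    apply contR_affine. apply finv_cont; auto.
Qed.

Lemma phi_mono i : (i < nf per J)%nat -> forall y1 y2, y1 <= y2 -> phi i y1 <= phi i y2.
Proof.
  intros Hi y1 y2 Hy. pose proof (MEdt_pos i Hi) as Hm. unfold phi, kv.
  assert (y1 / (ME per J X i * dt) + theta * Gc <= y2 / (ME per J X i * dt) + theta * Gc).
  { apply Rplus_le_compat_r. unfold Rdiv. apply Rmult_le_compat_r; auto.
    left; apply Rinv_0_lt_compat; auto. }
  apply (finv_mono f Hinc Hsur) in H.
  destruct (in_bd per J bc B0 i); lra.
Qed.

Lemma phi_surj i L : (i < nf per J)%nat -> exists y, phi i y = L.
Proof.
  intros Hi. pose proof (MEdt_pos i Hi) as Hm.
  set (s := if in_bd per J bc B0 i then f (2 * L) else f (L - rr i)).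
  exists ((s - theta * Gc) * (ME per J X i * dt)). unfold phi.
  replace ((s - theta * Gc) * (ME per J X i * dt) / (ME per J X i * dt) + theta * Gc) with s
    by (pose proof (ME_pos per J X ltac:(lia) Hlen i Hi); field; lra).
  unfold kv, s. destruct (in_bd per J bc B0 i); rewrite (finv_f f Hinc Hsur); lra.
Qed.

Lemma Phi_cont i : (i < nf per J)%nat -> contR (Phi i).
Proof. intros Hi. apply Gint_cont. apply phi_cont. apply phi_mono; auto. Qed.

Lemma Phi_supp i : (i < nf per J)%nat -> forall y Y, Phi i y - Phi i Y <= phi i y * (y - Y).
Proof. intros Hi y Y. apply (Gint_supp (phi i) (phi_cont i) (phi_mono i Hi)). Qed.

Lemma Phi_lin i L : (i < nf per J)%nat -> 0 <= L -> exists C, forall y, L * Rabs y - C <= Phi i y.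
Proof.
  intros Hi L0. destruct (phi_surj i L Hi) as [yp Hp]. destruct (phi_surj i (- L) Hi) as [ym Hm].
  apply (Gint_lin (phi i) (phi_cont i) (phi_mono i Hi) L yp ym); auto.
Qed.


Definition XY (Y : nat -> vec) : nat -> vec := fun j => vadd (X j) (Y j).
Definition Ey (Y : nat -> vec) : R :=
  / 2 * BB J X (XY Y) (XY Y) - bdry_rhs per J bc rho Y
  + nsum (nf per J) (fun i => Phi i (vdot (NE per J X i) (Y i))).
Definition Ex (x : nat -> R) : R := Ey (Pv x).

Lemma Ey_ext Y Y' : (forall j, (j <= J)%nat -> Y j = Y' j) -> Ey Y = Ey Y'.
Proof.
  intros H. unfold Ey. rewrite (BB_ext J X ltac:(lia) (XY Y) (XY Y') (XY Y) (XY Y')).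
  rewrite (bdry_ext per J bc rho Y Y' H).
  rewrite (nsum_ext _ _ (fun i => Phi i (vdot (NE per J X i) (Y' i)))). auto.
  intros i Hi. rewrite H; auto. unfold nf in Hi. destruct per; lia.
  intros j Hj. unfold XY. rewrite H; auto.
Qed.

Ltac cf := repeat (first [ apply contF_const | (apply contF_Pv1; lia) | (apply contF_Pv2; lia)
   | apply contF_plus | apply contF_minus | apply contF_mult | apply contF_opp ]).

Lemma Ex_cont : contF nn Ex.
Proof.
  unfold Ex, Ey. apply contF_plus; [apply contF_minus|].
  - apply (contF_ext _ _ (fun x => / 2 * sum_el J (fun j => hh J * vdot (vdrho J (XY (Pv x)) j)
        (vscal (/ lenrho J X j) (vdrho J (XY (Pv x)) j))))).
    { intros x. rewrite BB_el. auto. }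
    apply contF_mult; [apply contF_const|].
    apply contF_sum_el. intros j Hj. unfold vdot, vdrho, vscal, vsub, XY, vadd. simpl. cf.
  - unfold bdry_rhs. destruct per. apply contF_const.
    destruct (bc false), (bc true); unfold vdot, e1, e2, bnode; simpl; cf.
  - apply contF_nsum. intros i Hi.
    apply (contF_comp nn (Phi i) (fun x => vdot (NE per J X i) (Pv x i))).
    apply Phi_cont; auto. assert (i <= J)%nat by (unfold nf in Hi; destruct per; lia). unfold vdot. cf.
Qed.


Definition SY (Y : nat -> vec) : R :=
  sum_el J (fun j => Rabs (fst (Y j) - fst (Y (j-1)%nat)) + Rabs (snd (Y j) - snd (Y (j-1)%nat))).

Lemma SY_nonneg Y : 0 <= SY Y.
Proof. apply sum_el_nonneg. intros. pose proof (Rabs_pos (fst (Y j) - fst (Y (j-1)%nat))).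
  pose proof (Rabs_pos (snd (Y j) - snd (Y (j-1)%nat))). lra. Qed.

Lemma SY_bound Y j : (j <= J)%nat ->
  Rabs (fst (Y j) - fst (Y O)) <= SY Y /\ Rabs (snd (Y j) - snd (Y O)) <= SY Y.
Proof.
  intros Hj. set (F := fun j => Rabs (fst (Y j) - fst (Y (j-1)%nat)) + Rabs (snd (Y j) - snd (Y (j-1)%nat))).
  assert (Hm : sum_el j F <= SY Y).
  { apply sum_el_mono; auto. intros. unfold F. pose proof (Rabs_pos (fst (Y j0) - fst (Y (j0-1)%nat))).
    pose proof (Rabs_pos (snd (Y j0) - snd (Y (j0-1)%nat))). lra. }
  assert (G : forall k, Rabs (fst (Y k) - fst (Y O)) <= sum_el k F /\ Rabs (snd (Y k) - snd (Y O)) <= sum_el k F).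
  { induction k; simpl.
    - replace (fst (Y O) - fst (Y O)) with 0 by ring. replace (snd (Y O) - snd (Y O)) with 0 by ring.
      rewrite Rabs_R0. split; lra.
    - destruct IHk as [I1 I2].
      assert (EF : F (S k) = Rabs (fst (Y (S k)) - fst (Y k)) + Rabs (snd (Y (S k)) - snd (Y k)))
        by (unfold F; replace (S k - 1)%nat with k by lia; auto).
      pose proof (Rabs_pos (fst (Y (S k)) - fst (Y k))). pose proof (Rabs_pos (snd (Y (S k)) - snd (Y k))).
      replace (fst (Y (S k)) - fst (Y O)) with ((fst (Y (S k)) - fst (Y k)) + (fst (Y k) - fst (Y O))) by ring.
      replace (snd (Y (S k)) - snd (Y O)) with ((snd (Y (S k)) - snd (Y k)) + (snd (Y k) - snd (Y O))) by ring.
      pose proof (Rabs_triang (fst (Y (S k)) - fst (Y k)) (fst (Y k) - fst (Y O))).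
      pose proof (Rabs_triang (snd (Y (S k)) - snd (Y k)) (snd (Y k) - snd (Y O))).
      split; lra. }
  destruct (G j). split; lra.
Qed.

Lemma quad_scalar p q K a : 0 < a -> K * Rabs q - K ^ 2 * a - p ^ 2 / (2 * a) <= (p + q) ^ 2 / (2 * a).
Proof.
  intros Ha.
  assert (H1 : (p + q) ^ 2 >= q ^ 2 / 2 - p ^ 2) by (pose proof (pow2_ge_0 (2 * p + q)); nra).
  assert (H2 : q ^ 2 / 2 >= 2 * a * K * Rabs q - 2 * K ^ 2 * a ^ 2).
  { assert (Rabs q ^ 2 = q ^ 2) by (rewrite <- Rsqr_pow2, <- Rsqr_abs, Rsqr_pow2; auto).
    pose proof (pow2_ge_0 (Rabs q - 2 * a * K)). nra. }
  apply (Rmult_le_reg_r (2 * a)); [lra|].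
  replace ((p + q) ^ 2 / (2 * a) * (2 * a)) with ((p + q) ^ 2) by (field; lra).
  replace ((K * Rabs q - K ^ 2 * a - p ^ 2 / (2 * a)) * (2 * a))
    with (2 * a * K * Rabs q - 2 * K ^ 2 * a ^ 2 - p ^ 2) by (field; lra).
  lra.
Qed.

Lemma quad_lower K : exists Cq, forall Y, K * SY Y - Cq <= / 2 * BB J X (XY Y) (XY Y).
Proof.
  exists (sum_el J (fun j => 2 * (K ^ 2 * (hh J * lenrho J X j))
     + ((fst (X j) - fst (X (j-1)%nat)) ^ 2 + (snd (X j) - snd (X (j-1)%nat)) ^ 2) / (2 * (hh J * lenrho J X j)))).
  intros Y. rewrite BB_el. unfold SY. rewrite <- !sum_el_scal, <- sum_el_minus.
  apply sum_el_le. intros j Hj.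
  pose proof (hh_pos J ltac:(lia)). pose proof (Hlen j Hj).
  assert (Ha : 0 < hh J * lenrho J X j) by (apply Rmult_lt_0_compat; auto).
  set (p1 := fst (X j) - fst (X (j-1)%nat)). set (p2 := snd (X j) - snd (X (j-1)%nat)).
  set (q1 := fst (Y j) - fst (Y (j-1)%nat)). set (q2 := snd (Y j) - snd (Y (j-1)%nat)).
  replace (/ 2 * (hh J * vdot (vdrho J (XY Y) j) (vscal (/ lenrho J X j) (vdrho J (XY Y) j))))
    with ((p1 + q1) ^ 2 / (2 * (hh J * lenrho J X j)) + (p2 + q2) ^ 2 / (2 * (hh J * lenrho J X j))).
  2:{ unfold p1, p2, q1, q2, vdot, vdrho, vscal, vsub, XY, vadd. simpl. field. lra. }
  pose proof (quad_scalar p1 q1 K _ Ha). pose proof (quad_scalar p2 q2 K _ Ha).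
  lra.
Qed.

Lemma sum_lower m (G : nat -> R -> R) L :
  (forall i, (i < m)%nat -> exists C, forall y, L * Rabs y - C <= G i y) ->
  exists C, forall ys, L * nsum m (fun i => Rabs (ys i)) - C <= nsum m (fun i => G i (ys i)).
Proof.
  induction m; intros H.
  - exists 0. intros. simpl. lra.
  - destruct IHm as [C1 H1]. intros; apply H; lia.
    destruct (H m) as [C2 H2]; [lia|].
    exists (C1 + C2). intros ys. simpl. specialize (H1 ys). specialize (H2 (ys m)). lra.
Qed.

Hypothesis HBs : assumpB per J X.
Hypothesis Hrho : forall p, Rabs (rho p) <= 1.

Lemma NE_bound Y i : (i <= J)%nat ->
  Rabs (vdot (NE per J X i) (Y O)) - (Rabs (fst (NE per J X i)) + Rabs (snd (NE per J X i))) * SY Y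
  <= Rabs (vdot (NE per J X i) (Y i)).
Proof.
  intros Hi. destruct (SY_bound Y i Hi) as [B1 B2].
  set (n1 := fst (NE per J X i)). set (n2 := snd (NE per J X i)).
  replace (vdot (NE per J X i) (Y i)) with
     (vdot (NE per J X i) (Y O) + (n1 * (fst (Y i) - fst (Y O)) + n2 * (snd (Y i) - snd (Y O))))
     by (unfold vdot, n1, n2; ring).
  assert (T : Rabs (n1 * (fst (Y i) - fst (Y O)) + n2 * (snd (Y i) - snd (Y O))) <= (Rabs n1 + Rabs n2) * SY Y).
  { eapply Rle_trans; [apply Rabs_triang|]. rewrite !Rabs_mult.
    pose proof (Rabs_pos n1). pose proof (Rabs_pos n2).
    pose proof (Rabs_pos (fst (Y i) - fst (Y O))). pose proof (Rabs_pos (snd (Y i) - snd (Y O))). nra. }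
  set (v := vdot (NE per J X i) (Y O)). set (w := n1 * (fst (Y i) - fst (Y O)) + n2 * (snd (Y i) - snd (Y O))).
  pose proof (Rabs_triang_inv v (- w)). rewrite Rabs_Ropp in H.
  replace (v - - w) with (v + w) in H by ring.
  fold w in T. lra.
Qed.

Lemma key_lower : exists C, forall Y,
  SY Y + (Rabs (fst (Y O)) + Rabs (snd (Y O))) - C <= Ey Y.
Proof.
  destruct (span_bound per J X ltac:(lia) HBs) as [K [Kp HK]].
  set (L := 3 * K).
  destruct (sum_lower (nf per J) Phi L) as [CP HP].
  { intros i Hi. apply Phi_lin; auto. unfold L; lra. }
  set (gam := nsum (nf per J) (fun i => Rabs (fst (NE per J X i)) + Rabs (snd (NE per J X i)))).
  assert (g0 : 0 <= gam).
  { apply nsum_nonneg. intros. pose proof (Rabs_pos (fst (NE per J X i))). pose proof (Rabs_pos (snd (NE per J X i))). lra. }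
  destruct (quad_lower (L * gam + 3)) as [Cq HQ].
  exists (Cq + CP). intros Y. unfold Ey.
  specialize (HQ Y). specialize (HP (fun i => vdot (NE per J X i) (Y i))). simpl in HP.
  pose proof (bdry_bound per J bc rho Y Hrho) as HBd.
  destruct (SY_bound Y J ltac:(lia)) as [SJ1 SJ2].
  pose proof (SY_nonneg Y) as S0.
  assert (AJ1 : Rabs (fst (Y J)) <= Rabs (fst (Y O)) + SY Y).
  { replace (fst (Y J)) with (fst (Y O) + (fst (Y J) - fst (Y O))) by ring.
    pose proof (Rabs_triang (fst (Y O)) (fst (Y J) - fst (Y O))). lra. }
  assert (AJ2 : Rabs (snd (Y J)) <= Rabs (snd (Y O)) + SY Y).
  { replace (snd (Y J)) with (snd (Y O) + (snd (Y J) - snd (Y O))) by ring.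
    pose proof (Rabs_triang (snd (Y O)) (snd (Y J) - snd (Y O))). lra. }
  assert (HB1 : - bdry_rhs per J bc rho Y >= - (2 * (Rabs (fst (Y O)) + Rabs (snd (Y O))) + 2 * SY Y)).
  { pose proof (Rle_abs (bdry_rhs per J bc rho Y)). lra. }
  assert (HN : Wc per J X (Y O) - gam * SY Y <= nsum (nf per J) (fun i => Rabs (vdot (NE per J X i) (Y i)))).
  { unfold Wc, gam. rewrite Rmult_comm, <- nsum_scal, <- nsum_minus. apply nsum_le.
    intros i Hi. rewrite Rmult_comm. apply NE_bound. unfold nf in Hi; destruct per; lia. }
  specialize (HK (Y O)).
  assert (HL : L * (Wc per J X (Y O) - gam * SY Y) <= L * nsum (nf per J) (fun i => Rabs (vdot (NE per J X i) (Y i)))).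
  { apply Rmult_le_compat_l; auto. unfold L; lra. }
  assert (HL2 : L * Wc per J X (Y O) >= 3 * (Rabs (fst (Y O)) + Rabs (snd (Y O)))).
  { unfold L. nra. }
  assert (HQ2 : (L * gam + 3) * SY Y = L * gam * SY Y + 3 * SY Y) by ring.
  assert (HL3 : L * (Wc per J X (Y O) - gam * SY Y) = L * Wc per J X (Y O) - L * gam * SY Y) by ring.
  lra.
Qed.

Lemma coercive : exists M, 0 <= M /\ forall Y, Ey Y <= Ey (fun _ => (0, 0)) ->
  forall j, (j <= J)%nat -> Rabs (fst (Y j)) <= M /\ Rabs (snd (Y j)) <= M.
Proof.
  destruct key_lower as [C HC].
  exists (Ey (fun _ => (0, 0)) + C). split.
  - specialize (HC (fun _ => (0, 0))). simpl in HC. pose proof (SY_nonneg (fun _ => (0, 0))).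
    rewrite Rabs_R0 in HC. lra.
  - intros Y HY j Hj. specialize (HC Y). destruct (SY_bound Y j Hj) as [B1 B2].
    pose proof (Rabs_pos (fst (Y O))). pose proof (Rabs_pos (snd (Y O))).
    split.
    + replace (fst (Y j)) with (fst (Y O) + (fst (Y j) - fst (Y O))) by ring.
      pose proof (Rabs_triang (fst (Y O)) (fst (Y j) - fst (Y O))). lra.
    + replace (snd (Y j)) with (snd (Y O) + (snd (Y j) - snd (Y O))) by ring.
      pose proof (Rabs_triang (snd (Y O)) (snd (Y j) - snd (Y O))). lra.
Qed.


Definition MinBoxP : Prop := forall (n : nat) (F : (nat -> R) -> R) (M : R), 0 <= M -> contF n F ->
  exists x, (forall i, (i < n)%nat -> Rabs (x i) <= M) /\
     forall y, (forall i, (i < n)%nat -> Rabs (y i) <= M) -> F x <= F y.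

Lemma global_min : MinBoxP -> exists x, forall y, Ex x <= Ex y.
Proof.
  intros Hmin. destruct coercive as [M [M0 HM]].
  destruct (Hmin nn Ex M M0 Ex_cont) as [x [Hx Hxm]].
  exists x. intros y.
  assert (E0 : Ex (fun _ => 0) = Ey (fun _ => (0, 0))).
  { unfold Ex. apply Ey_ext. intros; apply Pv0. }
  assert (x0 : Ex x <= Ex (fun _ => 0)).
  { apply Hxm. intros. rewrite Rabs_R0. auto. }
  destruct (Rle_dec (Ex (fun _ => 0)) (Ex y)). lra.
  set (y' := Qv (Pv y)).
  assert (Ey' : Ex y' = Ex y).
  { unfold Ex. apply Ey_ext. intros j Hj. apply Pv_Qv; auto. apply Pv_W. }
  assert (box : forall i, (i < nn)%nat -> Rabs (y' i) <= M).
  { apply Qv_bound. intros j Hj. apply HM; auto. change (Ey (Pv y)) with (Ex y). apply Rnot_le_lt in n. lra. }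
  specialize (Hxm y' box). lra.
Qed.

Lemma XY_vlin Y eta t j : XY (vlin Y eta t) j = vlin (XY Y) eta t j.
Proof. unfold XY, vlin, vadd, vscal. simpl. f_equal; ring. Qed.

Lemma variational x : (forall y, Ex x <= Ex y) -> forall eta, inVVh_d per J bc eta ->
  BB J X (XY (Pv x)) eta - bdry_rhs per J bc rho eta
  + nsum (nf per J) (fun i => phi i (vdot (NE per J X i) (Pv x i)) * vdot (NE per J X i) (eta i)) = 0.
Proof.
  intros Hm eta Heta. set (dX := Pv x).
  set (D := fun t => BB J X (XY dX) eta - bdry_rhs per J bc rho eta + t * (/ 2 * BB J X eta eta)
     + nsum (nf per J) (fun i => phi i (vdot (NE per J X i) (dX i) + t * vdot (NE per J X i) (eta i))
                                 * vdot (NE per J X i) (eta i))).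
  assert (D0 : D 0 = 0).
  { apply limit0.
    - unfold D. apply contF_plus; [apply contF_plus|].
      + apply contF_const.
      + apply contF_mult; [apply contF_proj; lia| apply contF_const].
      + apply contF_nsum. intros i Hi. apply contF_mult; [|apply contF_const].
        apply (contF_comp 1 (phi i) (fun x => vdot (NE per J X i) (dX i) + x O * vdot (NE per J X i) (eta i))).
        apply phi_cont. apply contF_plus; [apply contF_const|].
        apply contF_mult; [apply contF_proj; lia| apply contF_const].
    - intros t. specialize (Hm (fun i => x i + t * Qv eta i)).
      assert (E1 : Ex (fun i => x i + t * Qv eta i) = Ey (vlin dX eta t)).
      { unfold Ex. apply Ey_ext. intros j Hj. rewrite Pv_lin. unfold vlin. rewrite Pv_Qv; auto. }
      rewrite E1 in Hm. unfold Ex in Hm. fold dX in Hm. unfold Ey in Hm.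
      rewrite (BB_ext J X ltac:(lia) (XY (vlin dX eta t)) (vlin (XY dX) eta t)
                 (XY (vlin dX eta t)) (vlin (XY dX) eta t)) in Hm
        by (intros; rewrite XY_vlin; auto).
      rewrite BB_expand, bdry_lin in Hm.
      rewrite (nsum_ext _ (fun i => Phi i (vdot (NE per J X i) (vlin dX eta t i)))
                (fun i => Phi i (vdot (NE per J X i) (dX i) + t * vdot (NE per J X i) (eta i)))) in Hm.
      2:{ intros i _. f_equal. unfold vlin, vdot, vadd, vscal. simpl. ring. }
      assert (HS : nsum (nf per J) (fun i => Phi i (vdot (NE per J X i) (dX i) + t * vdot (NE per J X i) (eta i)))
                 - nsum (nf per J) (fun i => Phi i (vdot (NE per J X i) (dX i)))
                 <= t * nsum (nf per J) (fun i => phi i (vdot (NE per J X i) (dX i) + t * vdot (NE per J X i) (eta i))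
                                 * vdot (NE per J X i) (eta i))).
      { rewrite <- nsum_minus, <- nsum_scal. apply nsum_le. intros i Hi.
        eapply Rle_trans; [apply Phi_supp; auto|]. right. ring. }
      unfold D. lra. }
  unfold D in D0. rewrite (nsum_ext _ _ (fun i => phi i (vdot (NE per J X i) (dX i)) * vdot (NE per J X i) (eta i))) in D0.
  lra. intros i _. f_equal. f_equal. ring.
Qed.


Hypothesis HXp : inVVh per J X.
Hypothesis Homp : inVVh per J om.

Lemma exists_sol : MinBoxP -> exists dX k, is_solution per J bc rho None None f theta X om km dt dX k.
Proof.
  intros Hmin. destruct (global_min Hmin) as [x Hx].
  set (dX := Pv x).
  set (kf := fun i => phi i (vdot (NE per J X i) (dX i))).
  set (k := fun j => kf (idx j)).
  assert (HdX : inVVh_d per J bc dX) by apply Pv_W.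
  assert (Hk : inVh per J k).
  { intros Hp. unfold k, idx. rewrite Hp, Nat.eqb_refl.
    rewrite (proj2 (Nat.eqb_neq 0 J)) by lia. reflexivity. }
  assert (Hnode : forall i, (i < nf per J)%nat ->
     k i - Kop per J bc X om k i = finv f Hsur (vdot (NE per J X i) (dX i) / (ME per J X i * dt) + theta * Gc)).
  { intros i Hi. unfold k, Kop. rewrite idx_nf by auto. unfold kf, phi, kv, rr.
    destruct (in_bd per J bc B0 i); [field|ring]. }
  exists dX, k. unfold is_solution. cbv zeta.
  split; [auto|split; [auto|split; [|split]]].
  - intros j Hj. split; auto.
  - intros chi Hchi.
    assert (HV : inVVh per J (fun j => vscal (/ dt) (vsub (vadd (X j) (dX j)) (X j)))).
    { intros Hp. simpl. rewrite (HXp Hp). destruct HdX as [[HdXp _] _]. rewrite (HdXp Hp). auto. }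
    assert (HF : inVh per J (fun i => f (k i - Kop per J bc X om k i))).
    { intros Hp. simpl. rewrite (Hk Hp). unfold Kop, in_bd. rewrite Hp. simpl.
      rewrite (HXp Hp), (Homp Hp). auto. }
    rewrite (N1 per J X ltac:(lia)) by auto.
    rewrite (N2 per J X ltac:(lia)) by auto.
    rewrite (N3 per J X ltac:(lia)) by auto.
    rewrite <- nsum_scal, <- nsum_minus. apply nsum_ext. intros i Hi.
    rewrite Hnode by auto. rewrite (f_finv f Hsur).
    pose proof (ME_pos per J X ltac:(lia) Hlen i Hi).
    unfold vdot, vscal, vsub, vadd. simpl. fold Gc. field. lra.
  - intros eta Heta.
    rewrite (N4 per J X ltac:(lia)) by (auto; destruct Heta as [[H _] _]; auto).
    pose proof (variational x Hx eta Heta) as HV. fold dX in HV.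
    rewrite (nsum_ext _ (fun i => k i * vdot (NE per J X i) (eta i))
        (fun i => phi i (vdot (NE per J X i) (dX i)) * vdot (NE per J X i) (eta i))).
    2:{ intros i Hi. unfold k. rewrite idx_nf by auto. auto. }
    unfold BB, XY in HV. lra.
Qed.

End Exist.


Lemma W_sub per J bc Y1 Y2 : inVVh_d per J bc Y1 -> inVVh_d per J bc Y2 ->
  inVVh_d per J bc (fun j => vsub (Y1 j) (Y2 j)).
Proof.
  intros [[P1 A1] [B1 [C1 D1]]] [[P2 A2] [B2 [C2 D2]]].
  split; [split|split; [|split]].
  - intros Hp. rewrite (P1 Hp), (P2 Hp). auto.
  - intros j Hj. specialize (A1 j Hj). specialize (A2 j Hj). unfold vdot, vsub in *. simpl in *. lra.
  - intros j Hj. specialize (B1 j Hj). specialize (B2 j Hj). unfold vdot, vsub in *. simpl in *. lra.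
  - intros j Hj. specialize (C1 j Hj). specialize (C2 j Hj). unfold vdot, vsub in *. simpl in *. lra.
  - intros j Hj. rewrite (D1 j Hj), (D2 j Hj). unfold vsub. simpl. f_equal; ring.
Qed.

Section Uniq.
Variable per : bool.
Variable J : nat.
Variable bc : bool -> bctype.
Variable rho : bool -> R.
Variables a b : option R.
Variable f : R -> R.
Variable theta : R.
Variables X om : nat -> vec.
Variable km : nat -> R.
Variable dt : R.
Hypothesis HJ : (3 <= J)%nat.
Hypothesis Hinc : forall x y, inab a b x -> inab a b y -> x < y -> f x < f y.
Hypothesis Hlen : forall j, (1 <= j <= J)%nat -> 0 < lenrho J X j.
Hypothesis HBs : assumpB per J X.
Hypothesis Hdt : 0 < dt.
Hypothesis HXp : inVVh per J X.
Hypothesis Homp : inVVh per J om.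

Definition Fk (k : nat -> R) (i : nat) : R := f (k i - Kop per J bc X om k i).

Lemma eq1_nodal dX k : is_solution per J bc rho a b f theta X om km dt dX k ->
  forall chi, inVh per J chi ->
  nsum (nf per J) (fun i => chi i * vdot (NE per J X i) (dX i)) / dt
  = nsum (nf per J) (fun i => ME per J X i * (chi i * Fk k i))
    - theta * Gm per J bc f X om km * nsum (nf per J) (fun i => ME per J X i * chi i).
Proof.
  intros [HdX [Hk [_ [E1 _]]]] chi Hchi. specialize (E1 chi Hchi).
  assert (HV : inVVh per J (fun j => vscal (/ dt) (vsub (vadd (X j) (dX j)) (X j)))).
  { intros Hp. rewrite (HXp Hp). destruct HdX as [[HdXp _] _]. rewrite (HdXp Hp). auto. }
  assert (HF : inVh per J (Fk k)).
  { intros Hp. unfold Fk. rewrite (Hk Hp). unfold Kop, in_bd. rewrite Hp. simpl.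
    rewrite (HXp Hp), (Homp Hp). auto. }
  rewrite (N1 per J X ltac:(lia)) in E1 by auto.
  rewrite (N2 per J X ltac:(lia) (Fk k)) in E1 by auto.
  rewrite (N3 per J X ltac:(lia)) in E1 by auto.
  rewrite <- E1. unfold Rdiv. rewrite Rmult_comm, <- nsum_scal. apply nsum_ext. intros i _.
  unfold vdot, vscal, vsub, vadd. simpl. ring.
Qed.

Lemma eq2_nodal dX k : is_solution per J bc rho a b f theta X om km dt dX k ->
  forall eta, inVVh_d per J bc eta ->
  nsum (nf per J) (fun i => k i * vdot (NE per J X i) (eta i)) + BB J X (fun j => vadd (X j) (dX j)) eta
  = bdry_rhs per J bc rho eta.
Proof.
  intros [HdX [Hk [_ [_ E2]]]] eta Heta. specialize (E2 eta Heta).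
  rewrite (N4 per J X ltac:(lia)) in E2 by (auto; destruct Heta as [[H _] _]; auto).
  unfold BB. auto.
Qed.

Lemma mono_node k1 k2 i : inab a b (k1 i - Kop per J bc X om k1 i) -> inab a b (k2 i - Kop per J bc X om k2 i) ->
  0 <= (k1 i - k2 i) * (Fk k1 i - Fk k2 i) /\
  ((k1 i - k2 i) * (Fk k1 i - Fk k2 i) = 0 -> k1 i = k2 i).
Proof.
  intros H1 H2. unfold Fk in *.
  assert (Hu : exists c, 0 < c /\ (k1 i - Kop per J bc X om k1 i) - (k2 i - Kop per J bc X om k2 i) = c * (k1 i - k2 i)).
  { unfold Kop. destruct (in_bd per J bc B0 i). exists 2. split; [lra|ring]. exists 1. split; [lra|ring]. }
  destruct Hu as [c [c0 Hc]].
  set (u1 := k1 i - Kop per J bc X om k1 i) in *. set (u2 := k2 i - Kop per J bc X om k2 i) in *.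
  destruct (Rtotal_order (k1 i) (k2 i)) as [Hl|[He|Hg]].
  - assert (u1 < u2) by nra. assert (f u1 < f u2) by (apply Hinc; auto). split; [nra|]. intros; nra.
  - split; [rewrite He; lra|auto].
  - assert (u2 < u1) by nra. assert (f u2 < f u1) by (apply Hinc; auto). split; [nra|]. intros; nra.
Qed.

Lemma uniq dX1 k1 dX2 k2 :
  is_solution per J bc rho a b f theta X om km dt dX1 k1 ->
  is_solution per J bc rho a b f theta X om km dt dX2 k2 ->
  forall j, (j <= J)%nat -> dX1 j = dX2 j /\ k1 j = k2 j.
Proof.
  intros S1 S2.
  assert (S1' := S1). assert (S2' := S2).
  destruct S1' as [W1 [K1 [I1 _]]]. destruct S2' as [W2 [K2 [I2 _]]].
  set (del := fun j => vsub (dX1 j) (dX2 j)).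
  set (chi := fun j => k1 j - k2 j).
  assert (Wd : inVVh_d per J bc del) by (apply W_sub; auto).
  assert (Vc : inVh per J chi) by (intros Hp; unfold chi; rewrite (K1 Hp), (K2 Hp); auto).
  set (A := nsum (nf per J) (fun i => chi i * vdot (NE per J X i) (del i))).
  set (Fs := nsum (nf per J) (fun i => ME per J X i * (chi i * (Fk k1 i - Fk k2 i)))).
  assert (EA : A / dt = Fs).
  { pose proof (eq1_nodal dX1 k1 S1 chi Vc) as Q1. pose proof (eq1_nodal dX2 k2 S2 chi Vc) as Q2.
    unfold A, Fs. replace (nsum (nf per J) (fun i => chi i * vdot (NE per J X i) (del i)))
      with (nsum (nf per J) (fun i => chi i * vdot (NE per J X i) (dX1 i))
           - nsum (nf per J) (fun i => chi i * vdot (NE per J X i) (dX2 i))).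
    2:{ rewrite <- nsum_minus. apply nsum_ext. intros. unfold del, vdot, vsub. simpl. ring. }
    replace (nsum (nf per J) (fun i => ME per J X i * (chi i * (Fk k1 i - Fk k2 i))))
      with (nsum (nf per J) (fun i => ME per J X i * (chi i * Fk k1 i))
           - nsum (nf per J) (fun i => ME per J X i * (chi i * Fk k2 i))).
    2:{ rewrite <- nsum_minus. apply nsum_ext. intros. ring. }
    unfold Rdiv in *. rewrite Rmult_minus_distr_r. lra. }
  assert (EB : A + BB J X del del = 0).
  { pose proof (eq2_nodal dX1 k1 S1 del Wd) as Q1. pose proof (eq2_nodal dX2 k2 S2 del Wd) as Q2.
    assert (BD : BB J X (fun j => vadd (X j) (dX1 j)) del - BB J X (fun j => vadd (X j) (dX2 j)) del
                 = BB J X del del).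
    { rewrite BB_diff. apply BB_ext; [lia|]. intros j _. split; auto.
      unfold del, vsub, vadd. simpl. f_equal; ring. }
    assert (NA : nsum (nf per J) (fun i => k1 i * vdot (NE per J X i) (del i))
               - nsum (nf per J) (fun i => k2 i * vdot (NE per J X i) (del i)) = A).
    { unfold A. rewrite <- nsum_minus. apply nsum_ext. intros. unfold chi. ring. }
    lra. }
  assert (Fs0 : forall i, (i < nf per J)%nat -> 0 <= ME per J X i * (chi i * (Fk k1 i - Fk k2 i))).
  { intros i Hi. pose proof (ME_pos per J X ltac:(lia) Hlen i Hi).
    assert (Hi' : (i <= J)%nat) by (unfold nf in Hi; destruct per; lia).
    destruct (mono_node k1 k2 i (I1 i Hi') (I2 i Hi')) as [M1 _].
    apply Rmult_le_pos; [lra|]. unfold chi. auto. }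
  assert (FsP : 0 <= Fs) by (apply nsum_nonneg; auto).
  assert (BP : 0 <= BB J X del del) by (apply BB_self_nonneg; auto; lia).
  assert (A0 : A = 0).
  { assert (0 <= A).
    { replace A with (Fs * dt) by (rewrite <- EA; field; lra). apply Rmult_le_pos; lra. }
    lra. }
  assert (Fz : Fs = 0) by (rewrite <- EA, A0; unfold Rdiv; ring).
  assert (Bz : BB J X del del = 0) by lra.
  assert (kfree : forall i, (i < nf per J)%nat -> k1 i = k2 i).
  { intros i Hi. pose proof (ME_pos per J X ltac:(lia) Hlen i Hi).
    assert (Hi' : (i <= J)%nat) by (unfold nf in Hi; destruct per; lia).
    pose proof (nsum_zero_each _ _ Fs0 Fz i Hi) as Z. simpl in Z.
    destruct (mono_node k1 k2 i (I1 i Hi') (I2 i Hi')) as [_ M2].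
    apply M2. apply Rmult_integral in Z. destruct Z; [lra|]. auto. }
  assert (kall : forall j, (j <= J)%nat -> k1 j = k2 j).
  { intros j Hj. destruct (Nat.lt_ge_cases j (nf per J)). auto.
    unfold nf in H. destruct per eqn:Hp; [|lia]. assert (j = J) by lia. subst j.
    rewrite (K1 eq_refl), (K2 eq_refl). apply kfree. unfold nf; lia. }
  assert (dconst : forall j, (j <= J)%nat -> del j = del O) by (apply (BB_self_zero J X); auto; lia).
  assert (d0 : del O = (0, 0)).
  { apply (span_zero per J X HBs). intros c Hc.
    rewrite (vdot_Bvec per J X ltac:(lia)) by auto.
    pose proof (eq1_nodal dX1 k1 S1 c Hc) as Q1. pose proof (eq1_nodal dX2 k2 S2 c Hc) as Q2.
    assert (EF : nsum (nf per J) (fun i => ME per J X i * (c i * Fk k1 i))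
               = nsum (nf per J) (fun i => ME per J X i * (c i * Fk k2 i))).
    { apply nsum_ext. intros i Hi. unfold Fk, Kop. rewrite (kfree i Hi). auto. }
    assert (ED : nsum (nf per J) (fun i => c i * vdot (NE per J X i) (dX1 i))
               - nsum (nf per J) (fun i => c i * vdot (NE per J X i) (dX2 i)) = 0).
    { apply (Rmult_eq_reg_r (/ dt)); [|apply Rinv_neq_0_compat; lra].
      rewrite Rmult_minus_distr_r. fold (Rdiv (nsum (nf per J) (fun i => c i * vdot (NE per J X i) (dX1 i))) dt).
      fold (Rdiv (nsum (nf per J) (fun i => c i * vdot (NE per J X i) (dX2 i))) dt).
      rewrite Q1, Q2, EF. ring. }
    rewrite <- nsum_minus in ED. rewrite <- ED. apply nsum_ext. intros i Hi.
    rewrite <- (dconst i) by (unfold nf in Hi; destruct per; lia).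
    unfold del, vdot, vsub. simpl. ring. }
  intros j Hj. split; [|apply kall; auto].
  pose proof (dconst j Hj) as Dj. rewrite d0 in Dj. unfold del, vsub in Dj.
  destruct (dX1 j) as [p1 p2], (dX2 j) as [q1 q2]. simpl in Dj. inversion Dj.
  f_equal; lra.
Qed.
End Uniq.

Lemma contF_ext_pt n F x y : contF n F -> (forall i, (i < n)%nat -> y i = x i) -> F y = F x.
Proof.
  intros cF H. destruct (Req_dec (F y) (F x)) as [e|ne]; auto.
  assert (0 < Rabs (F y - F x)) by (apply Rabs_pos_lt; lra).
  destruct (cF x _ H0) as [d [d0 Hd]].
  assert (Rabs (F y - F x) < Rabs (F y - F x)).
  { apply Hd. intros i Hi. rewrite H by auto. replace (x i - x i) with 0 by ring. rewrite Rabs_R0; lra. }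
  lra.
Qed.

Lemma abs_le_inv x M : Rabs x <= M -> -M <= x /\ x <= M.
Proof. unfold Rabs; destruct (Rcase_abs x); intros; lra. Qed.

Module MC.
From HB Require Import structures.
From mathcomp Require Import all_boot all_order all_algebra.
From mathcomp Require Import all_classical all_reals all_analysis.
From mathcomp Require Import Rstruct Rstruct_topology.
Import Order.TTheory GRing.Theory Num.Theory.
Local Open Scope classical_set_scope.
Local Open Scope ring_scope.

Lemma min_box (n : nat) (F : (nat -> R) -> R) (M : R) :
  (0 <= M)%coqR -> contF n F ->
  exists x, (forall i, (i < n)%coq_nat -> Rabs (x i) <= M)%coqR /\
     forall y, (forall i, (i < n)%coq_nat -> Rabs (y i) <= M)%coqR -> (F x <= F y)%coqR.
Proof.
move=> M0 cF.
pose tof (v : 'rV[R]_n.+1) : nat -> R := fun i => if (i < n)%N then v ord0 (inord i) else 0.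
pose G v := F (tof v).
pose A := [set v : 'rV[R]_n.+1 | forall i, `[(-M)%R, M]%classic (v ord0 i)].
have cA : compact A.
  by apply: (@rV_compact _ _ (fun=> `[(-M)%R, M]%classic)) => _; exact: segment_compact.
have A0 : A !=set0.
  exists 0 => i /=; rewrite mxE in_itv /=.
  apply/andP; split; apply/RleP; rewrite -?RoppE -?R0E; lra.
have cG : {within A, continuous G}.
  apply: continuous_subspaceT => v.
  rewrite /continuous_at => B /= /nbhs_ballP [e /= e0 eB].
  have e0' : (0 < e)%coqR by apply/RltP.
  have [d [d0 Hd]] := cF (tof v) e e0'.
  have d0' : 0 < d by apply/RltP.
  exists (fun i j => ball (v i j) d).
    by move=> i j; apply: nbhsx_ballx.
  move=> w Hw; apply: eB.
  rewrite /ball /= -RabsE. apply/RltP. rewrite Rabs_minus_sym. apply: Hd => i /ssrnat.ltP Hi.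
  rewrite /tof Hi. have := Hw ord0 (inord i). rewrite /ball /= -RabsE => /RltP.
  by rewrite Rabs_minus_sym.
have [v vA vmin] := compact_EVT_min A0 cA cG.
exists (tof v); split.
  move=> i /ssrnat.ltP Hi. rewrite /tof Hi.
  move: vA; rewrite inE => vA. have := vA (inord i). rewrite /= in_itv /= => /andP [/RleP h1 /RleP h2].
  apply: Rabs_le; rewrite -?RoppE in h1; lra.
move=> y Hy.
pose w : 'rV[R]_n.+1 := \row_j (if (j < n)%N then y j else 0).
have wA : A w.
  move=> j /=; rewrite mxE in_itv /=. case: ifP => jn.
    have := Hy j (ssrnat.ltP jn) => /abs_le_inv [h1 h2].
    by apply/andP; split; apply/RleP; rewrite -?RoppE.
  apply/andP; split; apply/RleP; rewrite -?RoppE -?R0E; lra.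
have := vmin w (mem_set wA).
rewrite /G => /RleP H.
have -> : F y = F (tof w); last exact: H.
apply: (contF_ext_pt _ _ _ _ cF) => i Hi.
have Hi' : (i < n)%N by apply/ssrnat.ltP.
rewrite /tof Hi' mxE inordK ?Hi' //; exact: ltnW.
Qed.
End MC.

Theorem theoremB1
  (a b : option R) (f : R -> R)
  (Hab : inab a b 0)
  (Hcont : forall x, inab a b x -> continuity_pt f x)
  (Hincr : forall x y, inab a b x -> inab a b y -> x < y -> f x < f y)
  (Hsurj : forall y, exists x, inab a b x /\ f x = y)
  (per : bool) (J : nat) (HJ : (3 <= J)%nat)
  (bc : bool -> bctype) (rho : bool -> R) (Hrho : forall p, Rabs (rho p) <= 1)
  (X om : nat -> vec) (km : nat -> R) (dt theta : R)
  (HX : inVVh_d0 per J bc X) (HA : assumpA per J bc X) (HB : assumpB per J X)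
  (Hom : omega_spec per J X om)
  (Hdt : 0 < dt)
  (Htheta : theta = 0 \/ theta = 1)
  (Hkm : inVh per J km)
  (Hkmab : theta = 1 -> forall j, (j <= J)%nat -> inab a b (km j - Kop per J bc X om km j)) :
  (a = None -> b = None ->
     exists dX k, is_solution per J bc rho a b f theta X om km dt dX k) /\
  (forall dX1 k1 dX2 k2,
     is_solution per J bc rho a b f theta X om km dt dX1 k1 ->
     is_solution per J bc rho a b f theta X om km dt dX2 k2 ->
     forall j, (j <= J)%nat -> dX1 j = dX2 j /\ k1 j = k2 j).

Proof.
  assert (Hlen : forall j, (1 <= j <= J)%nat -> 0 < lenrho J X j) by (destruct HA; auto).
  assert (HXp : inVVh per J X) by (destruct HX; auto).
  assert (Homp : inVVh per J om) by (destruct Hom; auto).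
  split.
  - intros Ha Hb. subst a b.
    assert (Hinc' : forall x y, x < y -> f x < f y)
      by (intros x y Hxy; apply Hincr; auto; split; exact I).
    assert (Hsur' : forall y, exists x, f x = y)
      by (intros y; destruct (Hsurj y) as [x [_ Hx]]; exists x; auto).
    apply (exists_sol per J bc rho X om HJ f Hinc' Hsur' km dt theta Hdt Hlen HB Hrho HXp Homp).
    exact MC.min_box.
  - intros dX1 k1 dX2 k2 S1 S2.
    exact (uniq per J bc rho a b f theta X om km dt HJ Hincr Hlen HB Hdt HXp Homp dX1 k1 dX2 k2 S1 S2).
Qed.
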